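(* Consider the impulsive system $\dot S=S(A-S)-\beta_0 IS$, $\dot I=\beta_0 IS-(\sigma+g)I$ for $t\neq nT$, $S(nT)=(1-p)S(nT^-)$, $I(nT)=I(nT^-)$, $n\in\mathbb{N}$. For $T>0$: (1) the disease-free trivial solution $(0,0)$ is locally asymptotically stable provided $p>p_1(T)$; (2) the disease-free periodic solution $(\mathcal{S},0)$ is locally asymptotically stable provided $p_2(T)<p<p_1(T)$, where $p_1(T)=1-e^{-AT}$ and $p_2(T)=1-e^{-(A-S_c)T}$.
   Context: Parameters: $A\in(0,1]$, $\beta_0>0$, $\sigma,g\ge0$ with $\sigma+g>0$, $p\in[0,1]$; $S_c=(\sigma+g)/\beta_0$; it is assumed $S(t)\le A$. $\mathcal{S}$ is the $T$-periodic function given for $nT\le t<(n+1)T$ by $\mathcal{S}(t)=\frac{A[e^{AT}(1-p)-1]}{e^{AT}(1-p)-1+pe^{A(T-(t-nT))}}$. Local asymptotic stability of a $T$-periodic solution through $x_0$: for every neighbourhood $V$ of $x_0$ there is a neighbourhood $W\subset V$ with $\varphi(kT,y_0)\in V$ for all $y_0\in W$, $k\in\mathbb{N}$, and there is a neighbourhood $V$ with $\varphi(kT,y_0)\to x_0$ for all $y_0\in V$. *)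

(* Defs.v *)
From Stdlib Require Import Reals.
From Coquelicot Require Import Coquelicot.
Open Scope R_scope.

Definition inD (A : R) (y : R * R) : Prop :=
  0 <= fst y <= A /\ 0 <= snd y.

(* (S, I) is a solution on [0, +oo) of the impulsive system
     S' = S (A - S) - b0 I S,  I' = b0 I S - (sigma+g) I   for t <> nT,
     S(nT) = (1-p) S(nT^-),    I(nT) = I(nT^-),            n >= 1,
   with initial (post-impulse) state (S(0), I(0)) = y0.  Solutions are
   right-continuous at the impulse times, differentiable in between, and
   have left limits at the impulse times. *)
Definition is_sol (A b0 sigma g p T : R) (y0 : R * R) (S I : R -> R) : Prop :=
  S 0 = fst y0 /\ I 0 = snd y0 /\
  forall n : nat,
    let a := INR n * T in
    (forall t, a < t < a + T ->
       is_derive S t (S t * (A - S t) - b0 * I t * S t) /\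
       is_derive I t (b0 * I t * S t - (sigma + g) * I t)) /\
    filterlim S (at_right a) (locally (S a)) /\
    filterlim I (at_right a) (locally (I a)) /\
    (exists lS, filterlim S (at_left (a + T)) (locally lS) /\ S (a + T) = (1 - p) * lS) /\
    (exists lI, filterlim I (at_left (a + T)) (locally lI) /\ I (a + T) = lI).

(* Local asymptotic stability of the T-periodic solution through x0, in terms
   of the stroboscopic values phi(kT, y0) = (S(kT), I(kT)) of solutions starting
   at y0 (in the state space). *)
Definition LAS (A b0 sigma g p T : R) (x0 : R * R) : Prop :=
  (forall V : R * R -> Prop, locally x0 V ->
     exists W : R * R -> Prop, locally x0 W /\ (forall y, W y -> V y) /\
       forall y0 S I, inD A y0 -> W y0 -> is_sol A b0 sigma g p T y0 S I ->
         forall k : nat, V (S (INR k * T), I (INR k * T))) /\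
  (exists V : R * R -> Prop, locally x0 V /\
     forall y0 S I, inD A y0 -> V y0 -> is_sol A b0 sigma g p T y0 S I ->
       filterlim (fun k : nat => (S (INR k * T), I (INR k * T))) eventually (locally x0)).

Definition Sc (b0 sigma g : R) : R := (sigma + g) / b0.
Definition p1 (A T : R) : R := 1 - exp (- (A * T)).
Definition p2 (A b0 sigma g T : R) : R := 1 - exp (- ((A - Sc b0 sigma g) * T)).

Definition Scal (A p T : R) (t : R) : R :=
  let n := IZR (Int_part (t / T)) in
  A * (exp (A * T) * (1 - p) - 1) /
  (exp (A * T) * (1 - p) - 1 + p * exp (A * (T - (t - n * T)))).

(* Main.v *)
Require Import Defs.
From Stdlib Require Import Reals.
From Stdlib Require Import Lra Psatz Classical ZArith.
From Coquelicot Require Import Coquelicot.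
Open Scope R_scope.

Module B1.
Open Scope R_scope.

Section Lims.
Context {T : Type} {F : (T -> Prop) -> Prop} {FF : Filter F}.

Lemma lim_plus (f g : T -> R) a b :
  filterlim f F (locally a) -> filterlim g F (locally b) ->
  filterlim (fun x => f x + g x) F (locally (a + b)).
Proof.
  intros Hf Hg. eapply filterlim_comp_2; [exact Hf|exact Hg|].
  apply (filterlim_plus a b).
Qed.

Lemma lim_mult (f g : T -> R) a b :
  filterlim f F (locally a) -> filterlim g F (locally b) ->
  filterlim (fun x => f x * g x) F (locally (a * b)).
Proof.
  intros Hf Hg. eapply filterlim_comp_2; [exact Hf|exact Hg|].
  apply (filterlim_mult a b).
Qed.

Lemma lim_const (c : R) : filterlim (fun _ : T => c) F (locally c).
Proof. apply filterlim_const. Qed.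

Lemma lim_comp (f : T -> R) (g : R -> R) a :
  filterlim f F (locally a) -> continuity_pt g a ->
  filterlim (fun x => g (f x)) F (locally (g a)).
Proof.
  intros Hf Hg. eapply filterlim_comp; [exact Hf|].
  now apply continuity_pt_filterlim.
Qed.

Lemma lim_opp (f : T -> R) a :
  filterlim f F (locally a) -> filterlim (fun x => - f x) F (locally (- a)).
Proof.
  intros Hf. apply (lim_comp f Ropp a Hf). apply continuity_pt_opp, continuity_pt_id.
Qed.

Lemma lim_minus (f g : T -> R) a b :
  filterlim f F (locally a) -> filterlim g F (locally b) ->
  filterlim (fun x => f x - g x) F (locally (a - b)).
Proof. intros Hf Hg. apply lim_plus; auto. now apply lim_opp. Qed.

Lemma lim_exp (f : T -> R) a :
  filterlim f F (locally a) -> filterlim (fun x => exp (f x)) F (locally (exp a)).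
Proof. intros Hf. apply (lim_comp f exp a Hf). apply derivable_continuous_pt, derivable_pt_exp. Qed.

End Lims.

Lemma locally_R_eps (l : R) (P : R -> Prop) :
  locally l P <-> exists eps, 0 < eps /\ forall y, Rabs (y - l) < eps -> P y.
Proof.
  split.
  - intros [e He]. exists e. split; [apply cond_pos|]. intros y Hy. apply He. exact Hy.
  - intros [e [He H]]. exists (mkposreal e He). intros y Hy. apply H. exact Hy.
Qed.

Lemma right_lim_eps f a l : filterlim f (at_right a) (locally l) ->
  forall eps, 0 < eps -> exists d, 0 < d /\ forall s, a < s < a + d -> Rabs (f s - l) < eps.
Proof.
  intros H eps Heps.
  assert (HL : locally l (fun y => Rabs (y - l) < eps)).
  { apply locally_R_eps. exists eps. split; auto. }
  specialize (H _ HL). destruct H as [d Hd]. exists d. split; [apply cond_pos|].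
  intros s Hs. apply Hd; [|lra]. change (Rabs (s - a) < d). rewrite Rabs_right; lra.
Qed.

Lemma left_lim_eps f a l : filterlim f (at_left a) (locally l) ->
  forall eps, 0 < eps -> exists d, 0 < d /\ forall s, a - d < s < a -> Rabs (f s - l) < eps.
Proof.
  intros H eps Heps.
  assert (HL : locally l (fun y => Rabs (y - l) < eps)).
  { apply locally_R_eps. exists eps. split; auto. }
  specialize (H _ HL). destruct H as [d Hd]. exists d. split; [apply cond_pos|].
  intros s Hs. apply Hd; [|lra]. change (Rabs (s - a) < d). rewrite Rabs_left; lra.
Qed.

Lemma cont_lim_eps (f : R -> R) (a l : R) : filterlim f (locally a) (locally l) ->
  forall eps, 0 < eps -> exists d, 0 < d /\ forall s, Rabs (s - a) < d -> Rabs (f s - l) < eps.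
Proof.
  intros H eps Heps.
  assert (HL : locally l (fun y => Rabs (y - l) < eps)).
  { apply locally_R_eps. exists eps. split; auto. }
  specialize (H _ HL). destruct H as [d Hd]. exists d. split; [apply cond_pos|].
  intros s Hs. apply Hd. exact Hs.
Qed.

Lemma eps_right_lim f a l :
  (forall eps, 0 < eps -> exists d, 0 < d /\ forall s, a < s < a + d -> Rabs (f s - l) < eps) ->
  filterlim f (at_right a) (locally l).
Proof.
  intros H P HP. apply locally_R_eps in HP. destruct HP as [e [He HP]].
  destruct (H e He) as [d [Hd Hs]]. exists (mkposreal d Hd). intros y Hy Hay.
  apply HP, Hs. change (Rabs (y - a) < d) in Hy. apply Rabs_def2 in Hy. lra.
Qed.

Lemma eps_left_lim f a l :
  (forall eps, 0 < eps -> exists d, 0 < d /\ forall s, a - d < s < a -> Rabs (f s - l) < eps) ->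
  filterlim f (at_left a) (locally l).
Proof.
  intros H P HP. apply locally_R_eps in HP. destruct HP as [e [He HP]].
  destruct (H e He) as [d [Hd Hs]]. exists (mkposreal d Hd). intros y Hy Hay.
  apply HP, Hs. change (Rabs (y - a) < d) in Hy. apply Rabs_def2 in Hy. lra.
Qed.

Lemma cont_right (f : R -> R) (a : R) : filterlim f (locally a) (locally (f a)) ->
  filterlim f (at_right a) (locally (f a)).
Proof.
  intros H. apply eps_right_lim. intros eps He. destruct (cont_lim_eps _ _ _ H eps He) as [d [Hd Hs]].
  exists d. split; auto. intros s Hs'. apply Hs. rewrite Rabs_right; lra.
Qed.

Lemma cont_left (f : R -> R) (a : R) : filterlim f (locally a) (locally (f a)) ->
  filterlim f (at_left a) (locally (f a)).
Proof.
  intros H. apply eps_left_lim. intros eps He. destruct (cont_lim_eps _ _ _ H eps He) as [d [Hd Hs]].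
  exists d. split; auto. intros s Hs'. apply Hs. rewrite Rabs_left; lra.
Qed.

Lemma derive_cont (f : R -> R) (t l : R) : is_derive f t l -> filterlim f (locally t) (locally (f t)).
Proof. intros H. apply (ex_derive_continuous (K:=R_AbsRing) (V:=R_NormedModule)). exists l. exact H. Qed.

Lemma derive_cpt (f : R -> R) (t l : R) : is_derive f t l -> continuity_pt f t.
Proof. intros H. apply continuity_pt_filterlim. eapply derive_cont; eauto. Qed.

End B1.
Import B1.

Module B2.
Open Scope R_scope.

Lemma mono_open (f df : R -> R) u v :
  (forall x, u < x < v -> is_derive f x (df x)) -> (forall x, u < x < v -> 0 <= df x) ->
  forall x y, u < x -> x <= y -> y < v -> f x <= f y.
Proof.
  intros Hd Hp x y Hx Hxy Hy.
  destruct (Req_dec x y) as [E|E]; [subst; lra|].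
  destruct (MVT_gen f x y df) as [c [Hc Heq]].
  - intros z Hz. rewrite Rmin_left in Hz by lra. rewrite Rmax_right in Hz by lra. apply Hd; lra.
  - intros z Hz. rewrite Rmin_left in Hz by lra. rewrite Rmax_right in Hz by lra.
    eapply derive_cpt. apply Hd; lra.
  - rewrite Rmin_left in Hc by lra. rewrite Rmax_right in Hc by lra.
    assert (0 <= df c) by (apply Hp; lra). nra.
Qed.

Lemma mono_right (f df : R -> R) u v L :
  (forall x, u < x < v -> is_derive f x (df x)) -> (forall x, u < x < v -> 0 <= df x) ->
  filterlim f (at_right u) (locally L) -> forall y, u < y < v -> L <= f y.
Proof.
  intros Hd Hp Hl y Hy. destruct (Rle_or_lt L (f y)) as [H|H]; auto. exfalso.
  destruct (right_lim_eps _ _ _ Hl (L - f y)) as [d [Hd0 Hs]]; [lra|].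
  set (x := u + Rmin d (y - u) / 2).
  assert (Hm1 : Rmin d (y - u) <= d) by apply Rmin_l.
  assert (Hm2 : Rmin d (y - u) <= y - u) by apply Rmin_r.
  assert (Hm3 : 0 < Rmin d (y - u)) by (apply Rmin_pos; lra).
  assert (Hx : u < x < u + d) by (unfold x; lra).
  specialize (Hs x Hx). apply Rabs_def2 in Hs.
  assert (f x <= f y) by (apply (mono_open f df u v Hd Hp); unfold x in *; lra).
  lra.
Qed.

Lemma mono_left (f df : R -> R) u v L :
  (forall x, u < x < v -> is_derive f x (df x)) -> (forall x, u < x < v -> 0 <= df x) ->
  filterlim f (at_left v) (locally L) -> forall x, u < x < v -> f x <= L.
Proof.
  intros Hd Hp Hl x Hx. destruct (Rle_or_lt (f x) L) as [H|H]; auto. exfalso.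
  destruct (left_lim_eps _ _ _ Hl (f x - L)) as [d [Hd0 Hs]]; [lra|].
  set (y := v - Rmin d (v - x) / 2).
  assert (Hm1 : Rmin d (v - x) <= d) by apply Rmin_l.
  assert (Hm2 : Rmin d (v - x) <= v - x) by apply Rmin_r.
  assert (Hm3 : 0 < Rmin d (v - x)) by (apply Rmin_pos; lra).
  assert (Hy : v - d < y < v) by (unfold y; lra).
  specialize (Hs y Hy). apply Rabs_def2 in Hs.
  assert (f x <= f y) by (apply (mono_open f df u v Hd Hp); unfold y in *; lra).
  lra.
Qed.

Lemma mono_both (f df : R -> R) u v L1 L2 :
  u < v ->
  (forall x, u < x < v -> is_derive f x (df x)) -> (forall x, u < x < v -> 0 <= df x) ->
  filterlim f (at_right u) (locally L1) -> filterlim f (at_left v) (locally L2) -> L1 <= L2.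
Proof.
  intros Huv Hd Hp H1 H2.
  assert (L1 <= f ((u+v)/2)) by (eapply mono_right; eauto; lra).
  assert (f ((u+v)/2) <= L2) by (eapply mono_left; eauto; lra).
  lra.
Qed.

Lemma neg_derive (f df : R -> R) u v :
  (forall x, u < x < v -> is_derive f x (df x)) ->
  (forall x, u < x < v -> is_derive (fun t => - f t) x (- df x)).
Proof. intros Hd x Hx. apply (is_derive_opp f x (df x)). auto. Qed.

Lemma antimono_right (f df : R -> R) u v L :
  (forall x, u < x < v -> is_derive f x (df x)) -> (forall x, u < x < v -> df x <= 0) ->
  filterlim f (at_right u) (locally L) -> forall y, u < y < v -> f y <= L.
Proof.
  intros Hd Hp Hl y Hy.
  assert (- L <= - f y); [|lra].
  apply (mono_right (fun t => - f t) (fun t => - df t) u v (-L)); auto.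
  - apply neg_derive; auto.
  - intros; specialize (Hp x H); lra.
  - now apply lim_opp.
Qed.

Lemma antimono_left (f df : R -> R) u v L :
  (forall x, u < x < v -> is_derive f x (df x)) -> (forall x, u < x < v -> df x <= 0) ->
  filterlim f (at_left v) (locally L) -> forall x, u < x < v -> L <= f x.
Proof.
  intros Hd Hp Hl x Hx.
  assert (- f x <= - L); [|lra].
  apply (mono_left (fun t => - f t) (fun t => - df t) u v (-L)); auto.
  - apply neg_derive; auto.
  - intros; specialize (Hp x0 H); lra.
  - now apply lim_opp.
Qed.

Lemma antimono_both (f df : R -> R) u v L1 L2 :
  u < v ->
  (forall x, u < x < v -> is_derive f x (df x)) -> (forall x, u < x < v -> df x <= 0) ->
  filterlim f (at_right u) (locally L1) -> filterlim f (at_left v) (locally L2) -> L2 <= L1.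
Proof.
  intros Huv Hd Hp H1 H2.
  assert (- L1 <= - L2); [|lra].
  apply (mono_both (fun t => - f t) (fun t => - df t) u v); auto.
  - apply neg_derive; auto.
  - intros; specialize (Hp x H); lra.
  - now apply lim_opp.
  - now apply lim_opp.
Qed.

Lemma right_lim_le (f : R -> R) a L C d :
  0 < d -> (forall s, a < s < a + d -> f s <= C) -> filterlim f (at_right a) (locally L) -> L <= C.
Proof.
  intros Hd H Hl. destruct (Rle_or_lt L C) as [h|h]; auto. exfalso.
  destruct (right_lim_eps _ _ _ Hl (L - C)) as [e [He Hs]]; [lra|].
  set (x := a + Rmin d e / 2).
  assert (Rmin d e <= d) by apply Rmin_l. assert (Rmin d e <= e) by apply Rmin_r.
  assert (0 < Rmin d e) by (apply Rmin_pos; lra).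
  specialize (Hs x ltac:(unfold x; lra)). specialize (H x ltac:(unfold x; lra)).
  apply Rabs_def2 in Hs. lra.
Qed.

Lemma left_lim_le (f : R -> R) a L C d :
  0 < d -> (forall s, a - d < s < a -> f s <= C) -> filterlim f (at_left a) (locally L) -> L <= C.
Proof.
  intros Hd H Hl. destruct (Rle_or_lt L C) as [h|h]; auto. exfalso.
  destruct (left_lim_eps _ _ _ Hl (L - C)) as [e [He Hs]]; [lra|].
  set (x := a - Rmin d e / 2).
  assert (Rmin d e <= d) by apply Rmin_l. assert (Rmin d e <= e) by apply Rmin_r.
  assert (0 < Rmin d e) by (apply Rmin_pos; lra).
  specialize (Hs x ltac:(unfold x; lra)). specialize (H x ltac:(unfold x; lra)).
  apply Rabs_def2 in Hs. lra.
Qed.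

Lemma left_lim_ge (f : R -> R) a L C d :
  0 < d -> (forall s, a - d < s < a -> C <= f s) -> filterlim f (at_left a) (locally L) -> C <= L.
Proof.
  intros Hd H Hl. assert (-L <= -C); [|lra].
  apply (left_lim_le (fun s => - f s) a (-L) (-C) d); auto.
  intros s Hs; specialize (H s Hs); lra. now apply lim_opp.
Qed.

Lemma right_lim_ge (f : R -> R) a L C d :
  0 < d -> (forall s, a < s < a + d -> C <= f s) -> filterlim f (at_right a) (locally L) -> C <= L.
Proof.
  intros Hd H Hl. assert (-L <= -C); [|lra].
  apply (right_lim_le (fun s => - f s) a (-L) (-C) d); auto.
  intros s Hs; specialize (H s Hs); lra. now apply lim_opp.
Qed.

End B2.
Import B2.

Module B3.
Open Scope R_scope.

Ltac req := cbv beta; match goal with |- @eq _ ?a ?b => change (@eq R a b) end; ring.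

Lemma abs_le_inv x a : Rabs x <= a -> - a <= x <= a.
Proof.
  intros H. pose proof (Rle_abs x). pose proof (Rle_abs (-x)). rewrite Rabs_Ropp in H1. lra.
Qed.

Lemma abs_le_intro x a : - a <= x <= a -> Rabs x <= a.
Proof. intros H. unfold Rabs. destruct (Rcase_abs x); lra. Qed.

Lemma d_eq (f : R -> R) x l l' : is_derive f x l -> l = l' -> is_derive f x l'.
Proof. intros H ->. exact H. Qed.

Lemma d_mult (f g : R -> R) x df dg : is_derive f x df -> is_derive g x dg ->
  is_derive (fun s => f s * g s) x (df * g x + f x * dg).
Proof. intros H1 H2. apply (is_derive_mult f g x df dg H1 H2). intros; apply Rmult_comm. Qed.

Lemma d_plus (f g : R -> R) x df dg : is_derive f x df -> is_derive g x dg ->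
  is_derive (fun s => f s + g s) x (df + dg).
Proof. intros H1 H2. apply (is_derive_plus f g x df dg H1 H2). Qed.

Lemma d_minus (f g : R -> R) x df dg : is_derive f x df -> is_derive g x dg ->
  is_derive (fun s => f s - g s) x (df - dg).
Proof. intros H1 H2. apply (is_derive_minus f g x df dg H1 H2). Qed.

Lemma d_const (c x : R) : is_derive (fun _ => c) x 0.
Proof. apply (is_derive_const c x). Qed.

Lemma d_id (x : R) : is_derive (fun s => s) x 1.
Proof. apply (is_derive_id x). Qed.

Lemma d_exp (f : R -> R) x df : is_derive f x df ->
  is_derive (fun s => exp (f s)) x (exp (f x) * df).
Proof.
  intros H. apply (d_eq _ _ _ _ (is_derive_comp exp f x (exp (f x)) df (is_derive_exp (f x)) H)).
  simpl. unfold scal; simpl; unfold mult; simpl. ring.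
Qed.

Lemma d_ln (f : R -> R) x df : is_derive f x df -> 0 < f x ->
  is_derive (fun s => ln (f s)) x (df / f x).
Proof.
  intros H Hp. apply (d_eq _ _ _ _ (is_derive_comp ln f x (/ f x) df (is_derive_ln (f x) Hp) H)).
  simpl. unfold scal; simpl; unfold mult; simpl. unfold Rdiv. ring.
Qed.

Lemma d_inv (f : R -> R) x df : is_derive f x df -> f x <> 0 ->
  is_derive (fun s => / f s) x (- df / (f x * f x)).
Proof.
  intros H Hp. apply (d_eq _ _ _ _ (is_derive_inv f x df H Hp)). simpl. field. auto.
Qed.

Lemma d_lin (c x : R) : is_derive (fun s => c * s) x c.
Proof. eapply d_eq; [apply (is_derive_scal (fun s => s) x c 1 (d_id x))|apply Rmult_1_r]. Qed.

Lemma d_explin (c x : R) : is_derive (fun s => exp (c * s)) x (c * exp (c * x)).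
Proof. eapply d_eq; [apply (d_exp _ x _ (d_lin c x))|req]. Qed.

Lemma real_ind (a b : R) (Q : R -> Prop) : a < b ->
  (forall t, a <= t < b -> (forall s, a <= s < t -> Q s) -> Q t) ->
  (forall t, a <= t < b -> Q t -> exists d, 0 < d /\ forall s, t < s < t + d -> Q s) ->
  forall t, a <= t < b -> Q t.
Proof.
  intros Hab H1 H2 t Ht. apply NNPP. intros hn.
  set (E := fun x => a <= x <= t /\ forall s, a <= s < x -> Q s).
  assert (HE : exists x, E x). { exists a. split; [lra|]. intros; lra. }
  assert (HB : bound E). { exists t. intros x [Hx _]. lra. }
  destruct (completeness E HB HE) as [m [Hub Hlub]].
  assert (Ham : a <= m). { apply Hub. split; [lra|]. intros; lra. }
  assert (Hmt : m <= t). { apply Hlub. intros x [Hx _]. lra. }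
  assert (Hall : forall s, a <= s < m -> Q s).
  { intros s Hs. apply NNPP. intros hq.
    assert (m <= s); [|lra]. apply Hlub. intros x [Hx Hx2].
    destruct (Rle_or_lt x s) as [h|h]; auto. exfalso. apply hq, Hx2. lra. }
  assert (Qm : Q m) by (apply H1; auto; lra).
  destruct (Req_dec m t) as [E1|E1]; [subst; contradiction|].
  destruct (H2 m ltac:(lra) Qm) as [d [Hd Hs]].
  set (x := Rmin (m + d/2) t).
  assert (x <= m + d/2) by apply Rmin_l. assert (x <= t) by apply Rmin_r.
  assert (m < x) by (apply Rmin_glb_lt; lra).
  assert (E x).
  { split; [lra|]. intros s Hs'.
    destruct (Rtotal_order s m) as [h|[h|h]].
    - apply Hall; lra.
    - subst; auto.
    - apply Hs; lra. }
  assert (x <= m) by (apply Hub; auto). lra.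
Qed.

Section Sign.
Variables (f df : R -> R) (a b : R).
Hypothesis Hab : a < b.
Hypothesis Hd : forall t, a < t < b -> is_derive f t (df t).
Hypothesis Hr : filterlim f (at_right a) (locally (f a)).
Hypothesis Hb : forall t, a <= t < b -> exists d M, 0 < d /\
  forall s, t - d < s < t + d -> a < s < b -> Rabs (df s) <= M * Rabs (f s).

Lemma rc_at t : a <= t < b -> filterlim f (at_right t) (locally (f t)).
Proof.
  intros Ht. destruct (Req_dec t a) as [->|h]; auto.
  apply cont_right. eapply derive_cont. apply Hd; lra.
Qed.

Lemma Hb' t : a <= t < b -> exists d M, 0 < d /\ 0 <= M /\
  forall s, t - d < s < t + d -> a < s < b -> Rabs (df s) <= M * Rabs (f s).
Proof.
  intros Ht. destruct (Hb t Ht) as [d [M [Hd0 H]]]. exists d, (Rabs M). split; auto. split; [apply Rabs_pos|].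
  intros s H1 H2. specialize (H s H1 H2). assert (M <= Rabs M) by apply RRle_abs.
  assert (0 <= Rabs (f s)) by apply Rabs_pos.
  assert (M * Rabs (f s) <= Rabs M * Rabs (f s)) by (apply Rmult_le_compat_r; auto).
  lra.
Qed.

Lemma key_ineq s M : Rabs (df s) <= M * Rabs (f s) ->
  Rabs (2 * f s * df s) <= 2 * M * (f s * f s).
Proof.
  intros H. rewrite !Rabs_mult. rewrite (Rabs_right 2) by lra.
  assert (Rabs (f s) * Rabs (f s) = f s * f s).
  { rewrite <- Rabs_mult. apply Rabs_right. nra. }
  assert (0 <= Rabs (f s)) by apply Rabs_pos.
  assert (Rabs (f s) * Rabs (df s) <= Rabs (f s) * (M * Rabs (f s))) by (apply Rmult_le_compat_l; auto).
  assert (Rabs (f s) * (M * Rabs (f s)) = M * (f s * f s)) by (rewrite <- H0; ring).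
  lra.
Qed.

Lemma sq_exp_derive c s : a < s < b ->
  is_derive (fun u => f u * f u * exp (c * u)) s
    ((2 * f s * df s + c * (f s * f s)) * exp (c * s)).
Proof.
  intros Hs. eapply d_eq.
  - apply d_mult; [apply d_mult; apply Hd; auto|apply d_explin].
  - req.
Qed.

Lemma sign_zero : f a = 0 -> forall t, a <= t < b -> f t = 0.
Proof.
  intros H0. apply (real_ind a b (fun t => f t = 0) Hab).
  - intros t Ht Hall. destruct (Req_dec t a) as [->|h]; auto.
    assert (Hl : filterlim f (at_left t) (locally (f t))).
    { apply cont_left. eapply derive_cont. apply Hd; lra. }
    assert (f t <= 0). { apply (left_lim_le f t (f t) 0 (t - a)); auto; try lra.
      intros s Hs. rewrite Hall; lra. }
    assert (0 <= f t). { apply (left_lim_ge f t (f t) 0 (t - a)); auto; try lra.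
      intros s Hs. rewrite Hall; lra. }
    lra.
  - intros t Ht Ft. destruct (Hb' t Ht) as [d [M [Hd0 [HM H]]]].
    set (e := Rmin d (b - t)).
    assert (e <= d) by apply Rmin_l. assert (e <= b - t) by apply Rmin_r.
    assert (0 < e) by (apply Rmin_pos; lra).
    exists e. split; auto. intros s Hs.
    set (G := fun u => f u * f u * exp ((-2 * M) * u)).
    assert (HG : G s <= G t).
    { apply (antimono_right G (fun u => (2 * f u * df u + (-2*M) * (f u * f u)) * exp ((-2*M) * u)) t (t + e) (G t)); [| | |lra].
      - intros u Hu. apply sq_exp_derive. lra.
      - intros u Hu. specialize (H u ltac:(lra) ltac:(lra)). apply key_ineq in H.
        apply abs_le_inv in H. assert (0 < exp (-2*M*u)) by apply exp_pos. nra.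
      - unfold G. apply lim_mult; [apply lim_mult; apply rc_at; auto|].
        apply lim_exp. apply lim_mult; [apply lim_const|]. apply (filterlim_filter_le_1 (F := locally t)).
        + intros P HP. destruct HP as [r Hr']. exists r. intros y Hy _. apply Hr'. exact Hy.
        + apply filterlim_id. }
    unfold G in HG. rewrite Ft in HG. assert (0 < exp (-2*M*s)) by apply exp_pos.
    assert (f s * f s * exp (-2 * M * s) <= 0) by lra.
    assert (f s * f s <= 0).
    { apply (Rmult_le_reg_r (exp (-2*M*s))); auto. lra. }
    nra.
Qed.

Lemma sign_pos : 0 < f a -> forall t, a <= t < b -> 0 < f t.
Proof.
  intros H0. apply (real_ind a b (fun t => 0 < f t) Hab).
  - intros t Ht Hall. destruct (Req_dec t a) as [->|h]; auto.
    assert (Hl : filterlim f (at_left t) (locally (f t))).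
    { apply cont_left. eapply derive_cont. apply Hd; lra. }
    assert (Hft : 0 <= f t). { apply (left_lim_ge f t (f t) 0 (t - a)); auto; try lra.
      intros s Hs. left. apply Hall; lra. }
    destruct (Hb' t Ht) as [d [M [Hd0 [HM H]]]].
    set (e := Rmin d (t - a)).
    assert (e <= d) by apply Rmin_l. assert (e <= t - a) by apply Rmin_r.
    assert (0 < e) by (apply Rmin_pos; lra).
    set (G := fun u => f u * f u * exp ((2 * M) * u)).
    assert (HG : G (t - e/2) <= G t).
    { apply (mono_left G (fun u => (2 * f u * df u + (2*M) * (f u * f u)) * exp ((2*M) * u)) (t - e) t (G t)); [| | |lra].
      - intros u Hu. apply sq_exp_derive. lra.
      - intros u Hu. specialize (H u ltac:(lra) ltac:(lra)). apply key_ineq in H.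
        apply abs_le_inv in H. assert (0 < exp (2*M*u)) by apply exp_pos. nra.
      - apply (cont_left G t). unfold G. apply lim_mult; [apply lim_mult; eapply derive_cont; apply Hd; lra|].
        apply lim_exp. apply lim_mult; [apply lim_const|]. apply filterlim_id. }
    assert (Hp : 0 < f (t - e/2)) by (apply Hall; lra).
    assert (0 < G (t - e/2)). { unfold G. assert (0 < exp (2*M*(t-e/2))) by apply exp_pos.
      apply Rmult_lt_0_compat; nra. }
    destruct Hft as [h1|h1]; auto. exfalso. assert (G t = 0) by (unfold G; rewrite <- h1; ring). lra.
  - intros t Ht Ft. destruct (right_lim_eps f t (f t) (rc_at t Ht) (f t) Ft) as [d [Hd0 Hs]].
    exists d. split; auto. intros s Hs'. specialize (Hs s Hs'). apply Rabs_def2 in Hs. lra.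
Qed.

Lemma sign_nonneg : 0 <= f a -> forall t, a <= t < b -> 0 <= f t.
Proof.
  intros [h|h] t Ht. left; now apply sign_pos. right; symmetry; apply sign_zero; auto.
Qed.

End Sign.

End B3.
Import B3.

Module B4.
Open Scope R_scope.

Lemma half_pow_pos n : 0 < (1/2)^n.
Proof. apply pow_lt. lra. Qed.

Lemma half_pow_S n : (1/2)^(S n) = (1/2)^n / 2.
Proof. simpl. field. Qed.

Lemma half_pow_small eps : 0 < eps -> exists N, forall n, (n >= N)%nat -> (1/2)^n < eps.
Proof.
  intros He. destruct (pow_lt_1_zero (1/2) ltac:(rewrite Rabs_right; lra) eps He) as [N HN].
  exists N. intros n Hn. specialize (HN n Hn). rewrite Rabs_right in HN; auto.
  left. apply half_pow_pos.
Qed.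

Lemma le_of_half_pow x y C : (forall n, x <= y + C * (1/2)^n) -> x <= y.
Proof.
  intros H. destruct (Rle_or_lt x y) as [h|h]; auto. exfalso.
  set (C' := Rabs C + 1).
  destruct (half_pow_small ((x - y) / C')) as [N HN].
  { unfold C'. apply Rdiv_lt_0_compat; [lra|]. pose proof (Rabs_pos C); lra. }
  specialize (HN N (le_n N)). specialize (H N).
  assert (C * (1/2)^N <= C' * (1/2)^N).
  { apply Rmult_le_compat_r; [left; apply half_pow_pos|]. unfold C'. pose proof (RRle_abs C); lra. }
  assert (C' * (1/2)^N < C' * ((x - y) / C')).
  { apply Rmult_lt_compat_l; auto. unfold C'. pose proof (Rabs_pos C); lra. }
  assert (C' * ((x - y) / C') = x - y). { field. unfold C'. pose proof (Rabs_pos C); lra. }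
  lra.
Qed.

Lemma geo_partial (u : nat -> R) K :
  (forall n, Rabs (u (S n) - u n) <= K * (1/2)^n) ->
  forall n j, Rabs (u (n + j)%nat - u n) <= 2 * K * (1/2)^n * (1 - (1/2)^j).
Proof.
  intros H n j. induction j.
  - rewrite Nat.add_0_r. simpl. rewrite Rminus_diag, Rabs_R0. lra.
  - replace (n + S j)%nat with (S (n + j)) by lia.
    specialize (H (n + j)%nat). rewrite pow_add in H.
    assert (Rabs (u (S (n + j)) - u n) <= Rabs (u (S (n + j)) - u (n + j)%nat) + Rabs (u (n+j)%nat - u n)).
    { replace (u (S (n + j)) - u n) with ((u (S (n + j)) - u (n + j)%nat) + (u (n+j)%nat - u n)) by ring.
      apply Rabs_triang. }
    simpl pow. simpl pow in H. lra.
Qed.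

Lemma geo_lim (u : nat -> R) K :
  (forall n, Rabs (u (S n) - u n) <= K * (1/2)^n) ->
  is_lim_seq u (real (Lim_seq u)) /\
  forall n, Rabs (real (Lim_seq u) - u n) <= 2 * K * (1/2)^n.
Proof.
  intros H.
  assert (HK : 0 <= K). { specialize (H O). simpl in H. pose proof (Rabs_pos (u 1%nat - u O)). lra. }
  assert (Hp : forall n m, (n <= m)%nat -> Rabs (u m - u n) <= 2 * K * (1/2)^n).
  { intros n m Hnm. replace m with (n + (m - n))%nat by lia.
    pose proof (geo_partial u K H n (m - n)). pose proof (half_pow_pos (m - n)).
    pose proof (half_pow_pos n).
    assert (2 * K * (1/2)^n * (1 - (1/2)^(m-n)) <= 2 * K * (1/2)^n).
    { assert (0 <= 2 * K * (1/2)^n) by (apply Rmult_le_pos; lra).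
      assert (2 * K * (1/2)^n * (1 - (1/2)^(m-n)) = 2 * K * (1/2)^n - 2 * K * (1/2)^n * (1/2)^(m-n)) by ring.
      assert (0 <= 2 * K * (1/2)^n * (1/2)^(m-n)) by (apply Rmult_le_pos; lra). lra. }
    lra. }
  assert (Hex : ex_finite_lim_seq u).
  { apply ex_lim_seq_cauchy_corr. intros eps.
    destruct (half_pow_small (eps / (4 * K + 1))) as [N HN].
    { apply Rdiv_lt_0_compat; [apply cond_pos|lra]. }
    exists N. intros n m Hn Hm.
    assert (Rabs (u n - u N) <= 2 * K * (1/2)^N) by (apply Hp; lia).
    assert (Rabs (u m - u N) <= 2 * K * (1/2)^N) by (apply Hp; lia).
    assert (Rabs (u n - u m) <= Rabs (u n - u N) + Rabs (u m - u N)).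
    { replace (u n - u m) with ((u n - u N) + - (u m - u N)) by ring.
      rewrite <- (Rabs_Ropp (u m - u N)). apply Rabs_triang. }
    specialize (HN N (le_n N)). pose proof (cond_pos eps). pose proof (half_pow_pos N).
    assert ((4 * K + 1) * (1/2)^N < (4*K+1) * (eps / (4 * K + 1))) by (apply Rmult_lt_compat_l; lra).
    assert ((4*K+1) * (eps / (4 * K + 1)) = eps) by (field; lra).
    assert (4 * K * (1/2)^N <= (4 * K + 1) * (1/2)^N) by nra.
    lra. }
  pose proof (Lim_seq_correct' u Hex) as Hl.
  destruct Hex as [l Hl0]. rewrite (is_lim_seq_unique u l Hl0). simpl.
  rewrite (is_lim_seq_unique u l Hl0) in Hl. simpl in Hl.
  split; auto.
  intros n. apply is_lim_seq_spec in Hl0.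
  destruct (Rle_or_lt (Rabs (l - u n)) (2 * K * (1/2)^n)) as [h|h]; auto. exfalso.
  destruct (Hl0 (mkposreal _ (Rlt_Rminus _ _ h))) as [N HN]. simpl in HN.
  specialize (HN (max N n) ltac:(lia)). specialize (Hp n (max N n) ltac:(lia)).
  assert (Rabs (l - u n) <= Rabs (u (max N n) - l) + Rabs (u (max N n) - u n)).
  { replace (l - u n) with (- (u (max N n) - l) + (u (max N n) - u n)) by ring.
    rewrite <- (Rabs_Ropp (u (max N n) - l)). apply Rabs_triang. }
  lra.
Qed.

End B4.
Import B4.

Module B5.
Open Scope R_scope.

Lemma eps_cont (g : R -> R) t :
  (forall eps, 0 < eps -> exists d, 0 < d /\ forall s, Rabs (s - t) < d -> Rabs (g s - g t) < eps) ->
  continuous g t.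
Proof.
  intros H P HP. apply locally_R_eps in HP. destruct HP as [e [He HP]].
  destruct (H e He) as [d [Hd Hs]]. exists (mkposreal d Hd). intros y Hy.
  apply HP, Hs. exact Hy.
Qed.

Lemma lip_cont (g : R -> R) K : (forall t s, Rabs (g t - g s) <= K * Rabs (t - s)) ->
  forall t, continuous g t.
Proof.
  intros H t. apply eps_cont. intros eps He. exists (eps / (Rabs K + 1)).
  pose proof (Rabs_pos K). split; [apply Rdiv_lt_0_compat; lra|].
  intros s Hs. specialize (H s t). pose proof (RRle_abs K). pose proof (Rabs_pos (s - t)).
  assert (K * Rabs (s - t) <= (Rabs K + 1) * Rabs (s - t)) by nra.
  assert ((Rabs K + 1) * Rabs (s - t) < (Rabs K + 1) * (eps / (Rabs K + 1))) by (apply Rmult_lt_compat_l; lra).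
  assert ((Rabs K + 1) * (eps / (Rabs K + 1)) = eps) by (field; lra).
  lra.
Qed.

Lemma exR (g : R -> R) u v : (forall t, continuous g t) -> ex_RInt g u v.
Proof. intros H. apply (ex_RInt_continuous (V:=R_CompleteNormedModule)). intros; auto. Qed.

Lemma RInt_abs_bound (g : R -> R) M u v : (forall t, continuous g t) ->
  (forall s, Rabs (g s) <= M) -> Rabs (RInt g u v) <= M * Rabs (v - u).
Proof.
  intros Hc Hb. destruct (Rle_or_lt u v) as [h|h].
  - rewrite (Rabs_right (v - u)) by (apply Rle_ge, Rge_le, Rge_minus, Rle_ge, h).
    rewrite Rmult_comm. apply (abs_RInt_le_const g u v M h (exR g u v Hc) (fun t _ => Hb t)).
  - rewrite <- (opp_RInt_swap g v u (exR g v u Hc)). change (Rabs (- RInt g v u) <= M * Rabs (v - u)).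
    rewrite Rabs_Ropp. rewrite (Rabs_left (v - u)) by lra.
    replace (- (v - u)) with (u - v) by ring. rewrite Rmult_comm.
    apply (abs_RInt_le_const g v u M ltac:(lra) (exR g v u Hc) (fun t _ => Hb t)).
Qed.

Lemma RInt_exp_val C lam u : 0 < lam ->
  RInt (fun s => C * exp (lam * s)) 0 u = C * (exp (lam * u) - 1) / lam.
Proof.
  intros Hl. apply is_RInt_unique.
  assert (Hd : forall x, is_derive (fun s => C * exp (lam * s) / lam) x (C * exp (lam * x))).
  { intros x. apply (is_derive_ext (fun s => C / lam * exp (lam * s))).
    { intros t. cbv beta. change (C / lam * exp (lam * t) = C * exp (lam * t) / lam). field. lra. }
    eapply d_eq. apply (is_derive_scal (fun s => exp (lam * s)) x (C / lam)).
    apply d_explin. cbv beta. change (C / lam * (lam * exp (lam * x)) = C * exp (lam * x)). field. lra. }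
  assert (E : C * (exp (lam * u) - 1) / lam = minus (C * exp (lam * u) / lam) (C * exp (lam * 0) / lam)).
  { rewrite Rmult_0_r, exp_0. unfold minus, plus, opp; simpl. field. lra. }
  rewrite E.
  apply (is_RInt_derive (V:=R_CompleteNormedModule) (fun s => C * exp (lam * s) / lam)).
  - intros x _. apply Hd.
  - intros x _. apply (ex_derive_continuous (K:=R_AbsRing) (V:=R_NormedModule)).
    eexists. eapply d_eq. apply (is_derive_scal (fun s => exp (lam * s)) x C). apply d_explin. reflexivity.
Qed.

End B5.
Import B5.

Module B6.
Open Scope R_scope.

Lemma exp_le x y : x <= y -> exp x <= exp y.
Proof. intros [h|h]. left; now apply exp_increasing. subst; lra. Qed.

Lemma exp_le_inv x y : exp x <= exp y -> x <= y.
Proof. intros h. destruct (Rle_or_lt x y) as [h'|h']; auto. apply exp_increasing in h'. lra. Qed.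

Definition clampH (H t : R) := Rmax 0 (Rmin t H).

Lemma clampH_range H t : 0 < H -> 0 <= clampH H t <= H.
Proof. intros. unfold clampH, Rmax, Rmin. repeat destruct Rle_dec; lra. Qed.

Lemma clampH_id H t : 0 <= t <= H -> clampH H t = t.
Proof. intros. unfold clampH, Rmax, Rmin. repeat destruct Rle_dec; lra. Qed.

Lemma clampH_lip H t s : 0 < H -> Rabs (clampH H t - clampH H s) <= Rabs (t - s).
Proof.
  intros. unfold clampH, Rmax, Rmin. apply abs_le_intro.
  pose proof (Rle_abs (t - s)). pose proof (Rle_abs (-(t - s))). rewrite Rabs_Ropp in H2.
  repeat destruct Rle_dec; lra.
Qed.

Section Picard.
Variables (f1 f2 : R -> R -> R) (L B H x0 y0 : R).
Hypothesis HL : 0 < L.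
Hypothesis HH : 0 < H.
Hypothesis Lip1 : forall x y x' y', Rabs (f1 x y - f1 x' y') <= L * (Rabs (x - x') + Rabs (y - y')).
Hypothesis Lip2 : forall x y x' y', Rabs (f2 x y - f2 x' y') <= L * (Rabs (x - x') + Rabs (y - y')).
Hypothesis Bd1 : forall x y, Rabs (f1 x y) <= B.
Hypothesis Bd2 : forall x y, Rabs (f2 x y) <= B.

Fixpoint pic (n : nat) : (R -> R) * (R -> R) :=
  match n with
  | O => (fun _ => x0, fun _ => y0)
  | S m => let P := pic m in
      (fun t => x0 + RInt (fun s => f1 (fst P s) (snd P s)) 0 (clampH H t),
       fun t => y0 + RInt (fun s => f2 (fst P s) (snd P s)) 0 (clampH H t))
  end.

Definition gx n s := f1 (fst (pic n) s) (snd (pic n) s).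
Definition gy n s := f2 (fst (pic n) s) (snd (pic n) s).

Lemma HB : 0 <= B.
Proof. pose proof (Bd1 0 0). pose proof (Rabs_pos (f1 0 0)). lra. Qed.

Lemma comp_lip (X Y : R -> R) (f : R -> R -> R) :
  (forall x y x' y', Rabs (f x y - f x' y') <= L * (Rabs (x - x') + Rabs (y - y'))) ->
  (forall t s, Rabs (X t - X s) <= B * Rabs (t - s)) ->
  (forall t s, Rabs (Y t - Y s) <= B * Rabs (t - s)) ->
  forall t s, Rabs (f (X t) (Y t) - f (X s) (Y s)) <= (2 * L * B) * Rabs (t - s).
Proof.
  intros Hf HX HY t s. specialize (Hf (X t) (Y t) (X s) (Y s)).
  specialize (HX t s). specialize (HY t s).
  assert (L * (Rabs (X t - X s) + Rabs (Y t - Y s)) <= L * (B * Rabs (t - s) + B * Rabs (t - s))).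
  { apply Rmult_le_compat_l; lra. }
  lra.
Qed.

Lemma int_lip (g : R -> R) (c : R) : (forall t, continuous g t) -> (forall s, Rabs (g s) <= B) ->
  forall t s, Rabs ((c + RInt g 0 (clampH H t)) - (c + RInt g 0 (clampH H s))) <= B * Rabs (t - s).
Proof.
  intros Hc Hb t s.
  replace ((c + RInt g 0 (clampH H t)) - (c + RInt g 0 (clampH H s)))
    with (RInt g (clampH H s) (clampH H t)).
  - pose proof (RInt_abs_bound g B (clampH H s) (clampH H t) Hc Hb).
    pose proof (clampH_lip H t s HH). pose proof HB.
    assert (B * Rabs (clampH H t - clampH H s) <= B * Rabs (t - s)) by (apply Rmult_le_compat_l; auto).
    lra.
  - pose proof (RInt_Chasles g 0 (clampH H s) (clampH H t) (exR _ _ _ Hc) (exR _ _ _ Hc)) as E.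
    change (RInt g 0 (clampH H s) + RInt g (clampH H s) (clampH H t) = RInt g 0 (clampH H t)) in E.
    rewrite <- E. lra.
Qed.

Lemma pic_lip n : (forall t s, Rabs (fst (pic n) t - fst (pic n) s) <= B * Rabs (t - s)) /\
                  (forall t s, Rabs (snd (pic n) t - snd (pic n) s) <= B * Rabs (t - s)).
Proof.
  induction n as [|n [IH1 IH2]].
  - simpl. split; intros; rewrite Rminus_diag, Rabs_R0; pose proof HB; pose proof (Rabs_pos (t - s)); nra.
  - assert (Hc1 : forall t, continuous (gx n) t).
    { apply (lip_cont _ (2 * L * B)). apply comp_lip; auto. }
    assert (Hc2 : forall t, continuous (gy n) t).
    { apply (lip_cont _ (2 * L * B)). apply comp_lip; auto. }
    split; simpl; intros t s.
    + apply (int_lip (gx n) x0 Hc1 (fun s => Bd1 _ _)).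
    + apply (int_lip (gy n) y0 Hc2 (fun s => Bd2 _ _)).
Qed.

Lemma gx_cont n t : continuous (gx n) t.
Proof. destruct (pic_lip n). apply (lip_cont _ (2 * L * B)). apply comp_lip; auto. Qed.
Lemma gy_cont n t : continuous (gy n) t.
Proof. destruct (pic_lip n). apply (lip_cont _ (2 * L * B)). apply comp_lip; auto. Qed.

Definition lam := 4 * L.
Definition K0 := 2 * B * H.

Definition Dn n t := Rabs (fst (pic (S n)) t - fst (pic n) t) + Rabs (snd (pic (S n)) t - snd (pic n) t).

Lemma step_bound (g1 g2 : R -> R) (c : R) n t :
  (forall s, continuous g1 s) -> (forall s, continuous g2 s) ->
  (forall s, 0 <= s <= H -> Rabs (g1 s - g2 s) <= L * (K0 * (1/2)^n * exp (lam * s))) ->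
  Rabs ((c + RInt g1 0 (clampH H t)) - (c + RInt g2 0 (clampH H t))) <= K0 * (1/2)^n * exp (lam * clampH H t) / 4.
Proof.
  intros H1 H2 Hb. set (u := clampH H t). pose proof (clampH_range H t HH) as Hu. fold u in Hu.
  replace ((c + RInt g1 0 u) - (c + RInt g2 0 u)) with (RInt (fun s => g1 s - g2 s) 0 u).
  2:{ pose proof (RInt_minus (V:=R_CompleteNormedModule) g1 g2 0 u (exR _ _ _ H1) (exR _ _ _ H2)) as E.
      change (RInt (fun s => g1 s - g2 s) 0 u = RInt g1 0 u - RInt g2 0 u) in E.
      rewrite E. lra. }
  assert (Hc : forall s, continuous (fun s => g1 s - g2 s) s).
  { intros s. apply (lim_minus (F := locally s)); [apply H1|apply H2]. }
  eapply Rle_trans. apply abs_RInt_le; [lra|apply exR; auto].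
  eapply Rle_trans. apply (RInt_le _ (fun s => L * (K0 * (1/2)^n) * exp (lam * s))); [lra| | |].
  - apply exR. intros s. apply (lim_comp (F := locally s) _ Rabs). apply Hc. apply continuity_pt_filterlim.
    apply continuous_Rabs.
  - apply exR. intros s. apply (lim_mult (F:=locally s)). apply lim_const.
    apply lim_exp. apply lim_mult; [apply lim_const|apply filterlim_id].
  - intros s Hs. rewrite Rmult_assoc. apply Hb. lra.
  - rewrite RInt_exp_val by (unfold lam; lra). unfold lam.
    assert (0 <= K0). { unfold K0. pose proof HB. nra. }
    pose proof (half_pow_pos n). pose proof (exp_pos (4 * L * u)).
    assert (0 <= K0 * (1/2)^n) by nra.
    apply (Rmult_le_reg_r (4 * L)); [lra|].
    replace (L * (K0 * (1 / 2) ^ n) * (exp (4 * L * u) - 1) / (4 * L) * (4 * L))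
      with (L * (K0 * (1 / 2) ^ n) * (exp (4 * L * u) - 1)) by (field; lra).
    replace (K0 * (1 / 2) ^ n * exp (4 * L * u) / 4 * (4 * L)) with (L * (K0 * (1 / 2) ^ n) * exp (4 * L * u)) by (field; lra).
    assert (0 <= L * (K0 * (1 / 2) ^ n)) by nra. nra.
Qed.

Lemma Dn_bound n t : Dn n t <= K0 * (1/2)^n * exp (lam * clampH H t).
Proof.
  revert t. induction n as [|n IH]; intros t.
  - unfold Dn. simpl.
    pose proof (clampH_range H t HH).
    assert (Rabs (x0 + RInt (gx 0) 0 (clampH H t) - x0) <= B * H).
    { replace (x0 + RInt (gx 0) 0 (clampH H t) - x0) with (RInt (gx 0) 0 (clampH H t)) by lra.
      eapply Rle_trans. apply (RInt_abs_bound _ B); [apply gx_cont|intros; apply Bd1].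
      rewrite Rminus_0_r, Rabs_right by lra. pose proof HB. nra. }
    assert (Rabs (y0 + RInt (gy 0) 0 (clampH H t) - y0) <= B * H).
    { replace (y0 + RInt (gy 0) 0 (clampH H t) - y0) with (RInt (gy 0) 0 (clampH H t)) by lra.
      eapply Rle_trans. apply (RInt_abs_bound _ B); [apply gy_cont|intros; apply Bd2].
      rewrite Rminus_0_r, Rabs_right by lra. pose proof HB. nra. }
    unfold gx, gy in *. simpl in *.
    assert (1 <= exp (lam * clampH H t)).
    { rewrite <- exp_0. apply exp_le. unfold lam. pose proof (clampH_range H t HH). nra. }
    unfold K0. rewrite Rmult_1_r. pose proof HB.
    assert (2 * B * H * 1 <= 2 * B * H * exp (lam * clampH H t)) by (apply Rmult_le_compat_l; nra).
    lra.
  - unfold Dn.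
    change (fst (pic (S (S n))) t) with (x0 + RInt (gx (S n)) 0 (clampH H t)).
    change (fst (pic (S n)) t) with (x0 + RInt (gx n) 0 (clampH H t)).
    change (snd (pic (S (S n))) t) with (y0 + RInt (gy (S n)) 0 (clampH H t)).
    change (snd (pic (S n)) t) with (y0 + RInt (gy n) 0 (clampH H t)).
    assert (Hb1 : forall s, 0 <= s <= H -> Rabs (gx (S n) s - gx n s) <= L * (K0 * (1/2)^n * exp (lam * s))).
    { intros s Hs. eapply Rle_trans; [apply Lip1|].
      apply Rmult_le_compat_l; [lra|]. pose proof (IH s) as h. rewrite clampH_id in h by auto. exact h. }
    assert (Hb2 : forall s, 0 <= s <= H -> Rabs (gy (S n) s - gy n s) <= L * (K0 * (1/2)^n * exp (lam * s))).
    { intros s Hs. eapply Rle_trans; [apply Lip2|].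
      apply Rmult_le_compat_l; [lra|]. pose proof (IH s) as h. rewrite clampH_id in h by auto. exact h. }
    pose proof (step_bound _ _ x0 n t (gx_cont (S n)) (gx_cont n) Hb1).
    pose proof (step_bound _ _ y0 n t (gy_cont (S n)) (gy_cont n) Hb2).
    rewrite half_pow_S. lra.
Qed.

Definition Kb := K0 * exp (lam * H).

Lemma Kb_pos : 0 <= Kb.
Proof. unfold Kb, K0. pose proof HB. pose proof (exp_pos (lam * H)). apply Rmult_le_pos; nra. Qed.

Lemma Dn_unif n t : Dn n t <= Kb * (1/2)^n.
Proof.
  eapply Rle_trans; [apply Dn_bound|]. unfold Kb.
  assert (exp (lam * clampH H t) <= exp (lam * H)).
  { apply exp_le. pose proof (clampH_range H t HH). unfold lam. nra. }
  assert (0 <= K0 * (1/2)^n). { unfold K0. pose proof HB. pose proof (half_pow_pos n). apply Rmult_le_pos; nra. }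
  replace (K0 * exp (lam * H) * (1/2)^n) with (K0 * (1/2)^n * exp (lam * H)) by ring.
  apply Rmult_le_compat_l; auto.
Qed.

Definition Xl t := real (Lim_seq (fun n => fst (pic n) t)).
Definition Yl t := real (Lim_seq (fun n => snd (pic n) t)).

Lemma Xl_bound n t : Rabs (Xl t - fst (pic n) t) <= 2 * Kb * (1/2)^n.
Proof.
  apply (geo_lim (fun n => fst (pic n) t) Kb). intros m.
  eapply Rle_trans; [|apply (Dn_unif m t)]. unfold Dn. pose proof (Rabs_pos (snd (pic (S m)) t - snd (pic m) t)). lra.
Qed.

Lemma Yl_bound n t : Rabs (Yl t - snd (pic n) t) <= 2 * Kb * (1/2)^n.
Proof.
  apply (geo_lim (fun n => snd (pic n) t) Kb). intros m.
  eapply Rle_trans; [|apply (Dn_unif m t)]. unfold Dn. pose proof (Rabs_pos (fst (pic (S m)) t - fst (pic m) t)). lra.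
Qed.

Lemma tri3 a b c d : Rabs (a - d) <= Rabs (a - b) + Rabs (b - c) + Rabs (c - d).
Proof.
  replace (a - d) with ((a - b) + (b - c) + (c - d)) by ring.
  eapply Rle_trans; [apply Rabs_triang|]. pose proof (Rabs_triang (a - b) (b - c)). lra.
Qed.

Lemma Xl_lip t s : Rabs (Xl t - Xl s) <= B * Rabs (t - s).
Proof.
  assert (0 <= Rabs (Xl t - Xl s)) by apply Rabs_pos.
  apply (le_of_half_pow _ _ (4 * Kb)). intros n.
  pose proof (tri3 (Xl t) (fst (pic n) t) (fst (pic n) s) (Xl s)) as T1.
  pose proof (Xl_bound n t) as T2. pose proof (Xl_bound n s) as T3. rewrite <- Rabs_Ropp in T3.
  replace (- (Xl s - fst (pic n) s)) with (fst (pic n) s - Xl s) in T3 by ring.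
  destruct (pic_lip n) as [H9 _]. specialize (H9 t s). lra.
Qed.

Lemma Yl_lip t s : Rabs (Yl t - Yl s) <= B * Rabs (t - s).
Proof.
  assert (0 <= Rabs (Yl t - Yl s)) by apply Rabs_pos.
  apply (le_of_half_pow _ _ (4 * Kb)). intros n.
  pose proof (tri3 (Yl t) (snd (pic n) t) (snd (pic n) s) (Yl s)) as T1.
  pose proof (Yl_bound n t) as T2. pose proof (Yl_bound n s) as T3. rewrite <- Rabs_Ropp in T3.
  replace (- (Yl s - snd (pic n) s)) with (snd (pic n) s - Yl s) in T3 by ring.
  destruct (pic_lip n) as [_ H9]. specialize (H9 t s). lra.
Qed.

Definition GX s := f1 (Xl s) (Yl s).
Definition GY s := f2 (Xl s) (Yl s).

Lemma GX_cont t : continuous GX t.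
Proof. apply (lip_cont _ (2 * L * B)). apply comp_lip; auto. exact Xl_lip. exact Yl_lip. Qed.
Lemma GY_cont t : continuous GY t.
Proof. apply (lip_cont _ (2 * L * B)). apply comp_lip; auto. exact Xl_lip. exact Yl_lip. Qed.

Lemma int_eq_gen (f : R -> R -> R) (c : R) (Gn G : R -> R) (Xn : R -> R) (Xlim : R -> R) n t :
  (forall s, continuous Gn s) -> (forall s, continuous G s) ->
  (forall s, Rabs (Gn s - G s) <= L * (4 * Kb * (1/2)^n)) ->
  Xn t = c + RInt Gn 0 (clampH H t) ->
  Rabs (Xlim t - Xn t) <= 2 * Kb * (1/2)^n ->
  Rabs (Xlim t - (c + RInt G 0 (clampH H t))) <= (2 * Kb + H * (L * (4 * Kb))) * (1/2)^n.
Proof.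
  intros Hc1 Hc2 Hb HX HXl.
  set (u := clampH H t). fold u in HX. pose proof (clampH_range H t HH). fold u in H0.
  assert (E : Xn t - (c + RInt G 0 u) = RInt (fun s => Gn s - G s) 0 u).
  { pose proof (RInt_minus (V:=R_CompleteNormedModule) Gn G 0 u (exR _ _ _ Hc1) (exR _ _ _ Hc2)) as E.
    change (RInt (fun s => Gn s - G s) 0 u = RInt Gn 0 u - RInt G 0 u) in E.
    rewrite E, HX. lra. }
  assert (Hc : forall s, continuous (fun s => Gn s - G s) s).
  { intros s. apply (lim_minus (F := locally s)); [apply Hc1|apply Hc2]. }
  assert (Hi : Rabs (Xn t - (c + RInt G 0 u)) <= L * (4 * Kb * (1 / 2) ^ n) * Rabs (u - 0)).
  { rewrite E. apply (RInt_abs_bound _ _ 0 u Hc Hb). }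
  rewrite Rminus_0_r, (Rabs_right u) in Hi by lra.
  pose proof (tri3 (Xlim t) (Xn t) (Xn t) (c + RInt G 0 u)). rewrite Rminus_diag, Rabs_R0 in H1.
  assert (L * (4 * Kb * (1 / 2) ^ n) * u <= H * (L * (4 * Kb)) * (1/2)^n).
  { pose proof Kb_pos. pose proof (half_pow_pos n).
    replace (H * (L * (4 * Kb)) * (1/2)^n) with (L * (4 * Kb * (1 / 2) ^ n) * H) by ring.
    apply Rmult_le_compat_l; [|lra]. apply Rmult_le_pos; [lra|]. apply Rmult_le_pos; lra. }
  lra.
Qed.

Lemma Xl_int t : Xl t = x0 + RInt GX 0 (clampH H t).
Proof.
  assert (Habs : Rabs (Xl t - (x0 + RInt GX 0 (clampH H t))) <= 0).
  { apply (le_of_half_pow _ _ (2 * Kb + H * (L * (4 * Kb)))). intros n. rewrite Rplus_0_l.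
    apply (int_eq_gen f1 x0 (gx n) GX (fst (pic (S n))) Xl n t (gx_cont n) GX_cont).
    - intros s. unfold gx, GX. eapply Rle_trans; [apply Lip1|]. apply Rmult_le_compat_l; [lra|].
      pose proof (Xl_bound n s) as T0. pose proof (Yl_bound n s) as T1.
      rewrite <- Rabs_Ropp in T0, T1.
      replace (- (Xl s - fst (pic n) s)) with (fst (pic n) s - Xl s) in T0 by ring.
      replace (- (Yl s - snd (pic n) s)) with (snd (pic n) s - Yl s) in T1 by ring. lra.
    - reflexivity.
    - eapply Rle_trans; [apply Xl_bound|]. rewrite half_pow_S. pose proof Kb_pos. pose proof (half_pow_pos n). assert (0 <= Kb * (1/2)^n) by (apply Rmult_le_pos; lra). lra. }
  pose proof (Rabs_pos (Xl t - (x0 + RInt GX 0 (clampH H t)))).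
  assert (Rabs (Xl t - (x0 + RInt GX 0 (clampH H t))) = 0) by lra.
  apply Rabs_eq_0 in H1. lra.
Qed.

Lemma Yl_int t : Yl t = y0 + RInt GY 0 (clampH H t).
Proof.
  assert (Habs : Rabs (Yl t - (y0 + RInt GY 0 (clampH H t))) <= 0).
  { apply (le_of_half_pow _ _ (2 * Kb + H * (L * (4 * Kb)))). intros n. rewrite Rplus_0_l.
    apply (int_eq_gen f2 y0 (gy n) GY (snd (pic (S n))) Yl n t (gy_cont n) GY_cont).
    - intros s. unfold gy, GY. eapply Rle_trans; [apply Lip2|]. apply Rmult_le_compat_l; [lra|].
      pose proof (Xl_bound n s) as T0. pose proof (Yl_bound n s) as T1.
      rewrite <- Rabs_Ropp in T0, T1.
      replace (- (Xl s - fst (pic n) s)) with (fst (pic n) s - Xl s) in T0 by ring.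
      replace (- (Yl s - snd (pic n) s)) with (snd (pic n) s - Yl s) in T1 by ring. lra.
    - reflexivity.
    - eapply Rle_trans; [apply Yl_bound|]. rewrite half_pow_S. pose proof Kb_pos. pose proof (half_pow_pos n). assert (0 <= Kb * (1/2)^n) by (apply Rmult_le_pos; lra). lra. }
  pose proof (Rabs_pos (Yl t - (y0 + RInt GY 0 (clampH H t)))).
  assert (Rabs (Yl t - (y0 + RInt GY 0 (clampH H t))) = 0) by lra.
  apply Rabs_eq_0 in H1. lra.
Qed.

Lemma int_derive (G : R -> R) (X : R -> R) c t :
  (forall s, continuous G s) -> (forall v, X v = c + RInt G 0 (clampH H v)) -> 0 < t < H ->
  is_derive X t (G t).
Proof.
  intros Hc HX Ht.
  assert (D : is_derive (fun v => RInt G 0 v) t (G t)).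
  { apply (is_derive_RInt (V:=R_CompleteNormedModule) G (fun v => RInt G 0 v) 0 t).
    - exists (mkposreal 1 Rlt_0_1). intros y _. apply (RInt_correct (V:=R_CompleteNormedModule)). apply exR. auto.
    - apply Hc. }
  apply (is_derive_ext_loc (fun v => c + RInt G 0 v)).
  - set (e := Rmin t (H - t)). assert (0 < e) by (apply Rmin_pos; lra).
    exists (mkposreal e H0). intros y Hy. change (Rabs (y - t) < e) in Hy. apply Rabs_def2 in Hy.
    assert (e <= t) by apply Rmin_l. assert (e <= H - t) by apply Rmin_r.
    rewrite HX, clampH_id by lra. reflexivity.
  - eapply d_eq. apply (d_plus (fun _ => c) (fun v => RInt G 0 v) t 0 (G t)); [apply d_const|exact D]. req.
Qed.

Theorem picard_sol :
  Xl 0 = x0 /\ Yl 0 = y0 /\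
  (forall t, continuous Xl t) /\ (forall t, continuous Yl t) /\
  (forall t, 0 < t < H -> is_derive Xl t (f1 (Xl t) (Yl t)) /\ is_derive Yl t (f2 (Xl t) (Yl t))).
Proof.
  split; [|split; [|split; [|split]]].
  - rewrite Xl_int, clampH_id by lra. rewrite RInt_point. change (x0 + 0 = x0). ring.
  - rewrite Yl_int, clampH_id by lra. rewrite RInt_point. change (y0 + 0 = y0). ring.
  - apply (lip_cont _ B). exact Xl_lip.
  - apply (lip_cont _ B). exact Yl_lip.
  - intros t Ht. split.
    + apply (int_derive GX Xl x0 t GX_cont Xl_int Ht).
    + apply (int_derive GY Yl y0 t GY_cont Yl_int Ht).
Qed.

End Picard.

End B6.
Import B6.

Module B7.
Open Scope R_scope.

Definition sg (Ls x : R) := Rmax 0 (Rmin x Ls).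

Lemma sg_range Ls x : 0 < Ls -> 0 <= sg Ls x <= Ls.
Proof. intros. unfold sg, Rmax, Rmin. repeat destruct Rle_dec; lra. Qed.
Lemma sg_lip Ls x x' : 0 < Ls -> Rabs (sg Ls x - sg Ls x') <= Rabs (x - x').
Proof. intros. apply (clampH_lip Ls x x' H). Qed.
Lemma sg_abs Ls x : 0 < Ls -> Rabs (sg Ls x) <= Rabs x.
Proof.
  intros. unfold sg, Rmax, Rmin. apply abs_le_intro.
  pose proof (Rle_abs x). pose proof (Rle_abs (-x)). rewrite Rabs_Ropp in H1.
  repeat destruct Rle_dec; lra.
Qed.
Lemma sg_le Ls x : 0 < Ls -> 0 <= x -> sg Ls x <= x.
Proof. intros. unfold sg, Rmax, Rmin. repeat destruct Rle_dec; lra. Qed.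
Lemma sg_id Ls x : 0 <= x <= Ls -> sg Ls x = x.
Proof. intros. unfold sg, Rmax, Rmin. repeat destruct Rle_dec; lra. Qed.

Lemma abs_comb d1 d2 P Q M1 M2 : Rabs P <= M1 -> Rabs Q <= M2 ->
  Rabs (d1 * P + d2 * Q) <= M1 * Rabs d1 + M2 * Rabs d2.
Proof.
  intros H1 H2. eapply Rle_trans; [apply Rabs_triang|]. rewrite !Rabs_mult.
  pose proof (Rabs_pos d1). pose proof (Rabs_pos d2). pose proof (Rabs_pos P). pose proof (Rabs_pos Q).
  assert (Rabs d1 * Rabs P <= Rabs d1 * M1) by (apply Rmult_le_compat_l; auto).
  assert (Rabs d2 * Rabs Q <= Rabs d2 * M2) by (apply Rmult_le_compat_l; auto).
  lra.
Qed.

Section Field.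
Variables (A b0 k Ls Ms : R).
Hypotheses (HA : 0 < A) (Hb0 : 0 < b0) (Hk : 0 < k) (HLs : 0 < Ls) (HMs : 0 < Ms).

Definition F1 x y := sg Ls x * (A - sg Ls x - b0 * sg Ms y).
Definition F2 x y := sg Ms y * (b0 * sg Ls x - k).
Definition LL := A + 2 * Ls + b0 * Ms + b0 * Ls + k + 1.
Definition BB := Ls * (A + Ls + b0 * Ms) + Ms * (b0 * Ls + k).

Lemma F1_lip x y x' y' : Rabs (F1 x y - F1 x' y') <= LL * (Rabs (x - x') + Rabs (y - y')).
Proof.
  unfold F1.
  set (s := sg Ls x). set (s' := sg Ls x'). set (t := sg Ms y). set (t' := sg Ms y').
  pose proof (sg_range Ls x HLs). pose proof (sg_range Ls x' HLs).
  pose proof (sg_range Ms y HMs). pose proof (sg_range Ms y' HMs).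
  fold s s' t t' in H, H0, H1, H2.
  replace (s * (A - s - b0 * t) - s' * (A - s' - b0 * t'))
    with ((s - s') * (A - s - s' - b0 * t) + (t - t') * (- b0 * s')) by ring.
  eapply Rle_trans. apply (abs_comb _ _ _ _ (A + 2 * Ls + b0 * Ms) (b0 * Ls)).
  - apply abs_le_intro. split; nra.
  - apply abs_le_intro. split; nra.
  - pose proof (sg_lip Ls x x' HLs). pose proof (sg_lip Ms y y' HMs). fold s s' t t' in H3, H4.
    pose proof (Rabs_pos (x - x')). pose proof (Rabs_pos (y - y')).
    pose proof (Rabs_pos (s - s')). pose proof (Rabs_pos (t - t')).
    assert ((A + 2 * Ls + b0 * Ms) * Rabs (s - s') <= (A + 2 * Ls + b0 * Ms) * Rabs (x - x')) by (apply Rmult_le_compat_l; nra).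
    assert ((b0 * Ls) * Rabs (t - t') <= (b0 * Ls) * Rabs (y - y')) by (apply Rmult_le_compat_l; nra).
    assert ((A + 2 * Ls + b0 * Ms) * Rabs (x - x') <= LL * Rabs (x - x')) by (apply Rmult_le_compat_r; unfold LL; nra).
    assert ((b0 * Ls) * Rabs (y - y') <= LL * Rabs (y - y')) by (apply Rmult_le_compat_r; unfold LL; nra).
    lra.
Qed.

Lemma F2_lip x y x' y' : Rabs (F2 x y - F2 x' y') <= LL * (Rabs (x - x') + Rabs (y - y')).
Proof.
  unfold F2.
  set (s := sg Ls x). set (s' := sg Ls x'). set (t := sg Ms y). set (t' := sg Ms y').
  pose proof (sg_range Ls x HLs). pose proof (sg_range Ls x' HLs).
  pose proof (sg_range Ms y HMs). pose proof (sg_range Ms y' HMs).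
  fold s s' t t' in H, H0, H1, H2.
  replace (t * (b0 * s - k) - t' * (b0 * s' - k))
    with ((s - s') * (b0 * t') + (t - t') * (b0 * s - k)) by ring.
  eapply Rle_trans. apply (abs_comb _ _ _ _ (b0 * Ms) (b0 * Ls + k)).
  - apply abs_le_intro. split; nra.
  - apply abs_le_intro. split; nra.
  - pose proof (sg_lip Ls x x' HLs). pose proof (sg_lip Ms y y' HMs). fold s s' t t' in H3, H4.
    pose proof (Rabs_pos (x - x')). pose proof (Rabs_pos (y - y')).
    pose proof (Rabs_pos (s - s')). pose proof (Rabs_pos (t - t')).
    assert ((b0 * Ms) * Rabs (s - s') <= (b0 * Ms) * Rabs (x - x')) by (apply Rmult_le_compat_l; nra).
    assert ((b0 * Ls + k) * Rabs (t - t') <= (b0 * Ls + k) * Rabs (y - y')) by (apply Rmult_le_compat_l; nra).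
    assert ((b0 * Ms) * Rabs (x - x') <= LL * Rabs (x - x')) by (apply Rmult_le_compat_r; unfold LL; nra).
    assert ((b0 * Ls + k) * Rabs (y - y') <= LL * Rabs (y - y')) by (apply Rmult_le_compat_r; unfold LL; nra).
    lra.
Qed.

Lemma abs_mult_le a b Ma Mb : Rabs a <= Ma -> Rabs b <= Mb -> Rabs (a * b) <= Ma * Mb.
Proof.
  intros. rewrite Rabs_mult. apply Rmult_le_compat; auto; apply Rabs_pos.
Qed.

Lemma inner1 x y : Rabs (A - sg Ls x - b0 * sg Ms y) <= A + Ls + b0 * Ms.
Proof.
  pose proof (sg_range Ls x HLs). pose proof (sg_range Ms y HMs).
  assert (0 <= b0 * sg Ms y) by (apply Rmult_le_pos; lra).
  assert (b0 * sg Ms y <= b0 * Ms) by (apply Rmult_le_compat_l; lra).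
  apply abs_le_intro. split; lra.
Qed.

Lemma inner2 x : Rabs (b0 * sg Ls x - k) <= b0 * Ls + k.
Proof.
  pose proof (sg_range Ls x HLs).
  assert (0 <= b0 * sg Ls x) by (apply Rmult_le_pos; lra).
  assert (b0 * sg Ls x <= b0 * Ls) by (apply Rmult_le_compat_l; lra).
  apply abs_le_intro. split; lra.
Qed.

Lemma F1_bd x y : Rabs (F1 x y) <= BB.
Proof.
  unfold F1, BB. pose proof (sg_range Ls x HLs).
  assert (Rabs (sg Ls x) <= Ls) by (apply abs_le_intro; lra).
  pose proof (abs_mult_le _ _ _ _ H0 (inner1 x y)).
  assert (0 <= Ms * (b0 * Ls + k)) by (apply Rmult_le_pos; [lra|]; assert (0 <= b0 * Ls) by (apply Rmult_le_pos; lra); lra).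
  lra.
Qed.

Lemma F2_bd x y : Rabs (F2 x y) <= BB.
Proof.
  unfold F2, BB. pose proof (sg_range Ms y HMs).
  assert (Rabs (sg Ms y) <= Ms) by (apply abs_le_intro; lra).
  pose proof (abs_mult_le _ _ _ _ H0 (inner2 x)).
  assert (0 <= Ls * (A + Ls + b0 * Ms)) by (apply Rmult_le_pos; [lra|]; assert (0 <= b0 * Ms) by (apply Rmult_le_pos; lra); lra).
  lra.
Qed.

Lemma F1_lin x y : Rabs (F1 x y) <= (A + Ls + b0 * Ms) * Rabs x.
Proof.
  unfold F1. rewrite (Rmult_comm (A + Ls + b0 * Ms)).
  apply abs_mult_le; [apply sg_abs; auto|apply inner1].
Qed.

Lemma F2_lin x y : Rabs (F2 x y) <= (b0 * Ls + k) * Rabs y.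
Proof.
  unfold F2. rewrite (Rmult_comm (b0 * Ls + k)).
  apply abs_mult_le; [apply sg_abs; auto|apply inner2].
Qed.

End Field.

End B7.
Import B7.

Module B8.
Open Scope R_scope.

Definition LsOf A T x0 := x0 * exp (2 * A * T) + 1.
Definition MsOf A b0 T x0 y0 := y0 * exp (b0 * LsOf A T x0 * (2 * T)) + 1.
Definition solX A b0 k T x0 y0 :=
  Xl (F1 A b0 (LsOf A T x0) (MsOf A b0 T x0 y0)) (F2 b0 k (LsOf A T x0) (MsOf A b0 T x0 y0)) (2 * T) x0 y0.
Definition solY A b0 k T x0 y0 :=
  Yl (F1 A b0 (LsOf A T x0) (MsOf A b0 T x0 y0)) (F2 b0 k (LsOf A T x0) (MsOf A b0 T x0 y0)) (2 * T) x0 y0.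

Lemma exp_mul_inv c t : exp (c * t) * exp (- c * t) = 1.
Proof. rewrite <- exp_plus. replace (c * t + - c * t) with 0 by ring. apply exp_0. Qed.

Lemma cont_at_right0 (f : R -> R) : (forall t, continuous f t) -> filterlim f (at_right 0) (locally (f 0)).
Proof. intros H. apply cont_right. apply H. Qed.

Lemma growth_bound (f d : R -> R) (c a b : R) : a < b ->
  (forall t, a < t < b -> is_derive f t (d t)) ->
  (forall t, a < t < b -> d t <= c * f t) ->
  filterlim f (at_right a) (locally (f a)) ->
  forall t, a < t < b -> f t <= f a * exp (c * (t - a)).
Proof.
  intros Hab Hd Hle Hr t Ht.
  set (h := fun u => f u * exp (- c * u)).
  assert (Hh : h t <= h a).
  { apply (antimono_right h (fun u => d u * exp (- c * u) + f u * (- c * exp (- c * u))) a b (h a)); auto.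
    - intros u Hu. unfold h. apply (d_mult f (fun s => exp (- c * s)) u (d u) (- c * exp (- c * u))); [apply Hd; auto|apply d_explin].
    - intros u Hu. specialize (Hle u Hu). pose proof (exp_pos (- c * u)).
      replace (d u * exp (- c * u) + f u * (- c * exp (- c * u))) with ((d u - c * f u) * exp (- c * u)) by ring.
      assert (d u - c * f u <= 0) by lra.
      apply Rmult_le_0_r; lra.
    - unfold h. apply lim_mult; auto. apply lim_exp. apply lim_mult; [apply lim_const|].
      apply (filterlim_filter_le_1 (F := locally a)).
      + intros P HP. destruct HP as [r Hr']. exists r. intros y Hy _. apply Hr'. exact Hy.
      + apply filterlim_id. }
  unfold h in Hh. pose proof (exp_pos (c * t)).
  assert (f t * exp (- c * t) * exp (c * t) <= f a * exp (- c * a) * exp (c * t)) by (apply Rmult_le_compat_r; lra).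
  rewrite Rmult_assoc, (Rmult_comm (exp (- c * t))), exp_mul_inv, Rmult_1_r in H0.
  rewrite Rmult_assoc, <- exp_plus in H0. replace (- c * a + c * t) with (c * (t - a)) in H0 by ring.
  exact H0.
Qed.

Lemma F1_le A b0 Ls Ms x y : 0 < A -> 0 < Ls -> 0 < Ms -> 0 < b0 -> 0 <= x -> F1 A b0 Ls Ms x y <= A * x.
Proof.
  intros HA HL HM Hb Hx. unfold F1. pose proof (sg_range Ls x HL). pose proof (sg_range Ms y HM).
  pose proof (sg_le Ls x HL Hx).
  assert (0 <= sg Ls x * sg Ls x) by (apply Rmult_le_pos; lra).
  assert (0 <= b0 * sg Ms y) by (apply Rmult_le_pos; lra).
  assert (0 <= sg Ls x * (b0 * sg Ms y)) by (apply Rmult_le_pos; lra).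
  assert (A * sg Ls x <= A * x) by (apply Rmult_le_compat_l; lra).
  replace (sg Ls x * (A - sg Ls x - b0 * sg Ms y)) with (A * sg Ls x - sg Ls x * sg Ls x - sg Ls x * (b0 * sg Ms y)) by ring.
  lra.
Qed.

Lemma F2_le b0 k Ls Ms x y : 0 < k -> 0 < Ls -> 0 < Ms -> 0 < b0 -> 0 <= y -> F2 b0 k Ls Ms x y <= b0 * Ls * y.
Proof.
  intros Hk HL HM Hb Hy. unfold F2. pose proof (sg_range Ls x HL). pose proof (sg_range Ms y HM).
  pose proof (sg_le Ms y HM Hy).
  assert (sg Ms y * (b0 * sg Ls x - k) <= sg Ms y * (b0 * Ls)).
  { apply Rmult_le_compat_l; [lra|]. assert (b0 * sg Ls x <= b0 * Ls) by (apply Rmult_le_compat_l; lra). lra. }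
  assert (sg Ms y * (b0 * Ls) <= y * (b0 * Ls)).
  { apply Rmult_le_compat_r; [|lra]. apply Rmult_le_pos; lra. }
  lra.
Qed.

Lemma period_sol A b0 k T x0 y0 : 0 < A -> 0 < b0 -> 0 < k -> 0 < T -> 0 <= x0 -> 0 <= y0 ->
  let X := solX A b0 k T x0 y0 in let Y := solY A b0 k T x0 y0 in
  X 0 = x0 /\ Y 0 = y0 /\ (forall t, continuous X t) /\ (forall t, continuous Y t) /\
  (forall t, 0 < t < 2 * T -> is_derive X t (X t * (A - X t) - b0 * Y t * X t) /\
                              is_derive Y t (b0 * Y t * X t - k * Y t)) /\
  (forall t, 0 <= t < 2 * T -> 0 <= X t /\ 0 <= Y t).
Proof.
  intros HA Hb Hk HT Hx Hy X Y.
  set (Ls := LsOf A T x0). set (Ms := MsOf A b0 T x0 y0).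
  assert (HLs : 0 < Ls). { unfold Ls, LsOf. pose proof (exp_pos (2 * A * T)). nra. }
  assert (HMs : 0 < Ms). { unfold Ms, MsOf. fold Ls. pose proof (exp_pos (b0 * Ls * (2 * T))). nra. }
  assert (HLL : 0 < LL A b0 k Ls Ms).
  { unfold LL. assert (0 <= b0 * Ms) by (apply Rmult_le_pos; lra). assert (0 <= b0 * Ls) by (apply Rmult_le_pos; lra). lra. }
  destruct (picard_sol (F1 A b0 Ls Ms) (F2 b0 k Ls Ms) (LL A b0 k Ls Ms) (BB A b0 k Ls Ms) (2 * T) x0 y0
    HLL ltac:(lra) (F1_lip A b0 k Ls Ms HA Hb Hk HLs HMs) (F2_lip A b0 k Ls Ms HA Hb Hk HLs HMs)
    (F1_bd A b0 k Ls Ms HA Hb Hk HLs HMs) (F2_bd A b0 k Ls Ms HA Hb Hk HLs HMs))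
    as [HX0 [HY0 [HXc [HYc HD]]]].
  change (X 0 = x0) in HX0. change (Y 0 = y0) in HY0.
  change (forall t, continuous X t) in HXc. change (forall t, continuous Y t) in HYc.
  change (forall t, 0 < t < 2 * T -> is_derive X t (F1 A b0 Ls Ms (X t) (Y t)) /\ is_derive Y t (F2 b0 k Ls Ms (X t) (Y t))) in HD.
  assert (HT2 : 0 < 2 * T) by lra.
  assert (PX : forall t, 0 <= t < 2 * T -> 0 <= X t).
  { apply (sign_nonneg X (fun t => F1 A b0 Ls Ms (X t) (Y t)) 0 (2 * T) HT2).
    - intros t Ht. apply HD; auto.
    - apply cont_at_right0; auto.
    - intros t Ht. exists 1, (A + Ls + b0 * Ms). split; [lra|]. intros s _ _. apply F1_lin; auto.
    - rewrite HX0; exact Hx. }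
  assert (PY : forall t, 0 <= t < 2 * T -> 0 <= Y t).
  { apply (sign_nonneg Y (fun t => F2 b0 k Ls Ms (X t) (Y t)) 0 (2 * T) HT2).
    - intros t Ht. apply HD; auto.
    - apply cont_at_right0; auto.
    - intros t Ht. exists 1, (b0 * Ls + k). split; [lra|]. intros s _ _. apply F2_lin; auto.
    - rewrite HY0; exact Hy. }
  assert (UX : forall t, 0 <= t < 2 * T -> X t < Ls).
  { intros t Ht. destruct (Req_dec t 0) as [->|h].
    - rewrite HX0. unfold Ls, LsOf. pose proof (exp_pos (2*A*T)).
      assert (1 <= exp (2 * A * T)) by (rewrite <- exp_0; apply exp_le; nra). nra.
    - pose proof (growth_bound X (fun t => F1 A b0 Ls Ms (X t) (Y t)) A 0 (2 * T) HT2
        (fun t Ht => proj1 (HD t Ht)) (fun t Ht => F1_le A b0 Ls Ms (X t) (Y t) HA HLs HMs Hb (PX t ltac:(lra)))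
        (cont_at_right0 X HXc) t ltac:(lra)) as G.
      rewrite HX0, Rminus_0_r in G.
      assert (exp (A * t) <= exp (2 * A * T)) by (apply exp_le; nra).
      assert (x0 * exp (A * t) <= x0 * exp (2 * A * T)) by (apply Rmult_le_compat_l; lra).
      unfold Ls, LsOf. lra. }
  assert (UY : forall t, 0 <= t < 2 * T -> Y t < Ms).
  { intros t Ht. destruct (Req_dec t 0) as [->|h].
    - rewrite HY0. unfold Ms, MsOf. fold Ls. pose proof (exp_pos (b0 * Ls * (2 * T))).
      assert (1 <= exp (b0 * Ls * (2 * T))) by (rewrite <- exp_0; apply exp_le; apply Rmult_le_pos; [apply Rmult_le_pos|]; lra). nra.
    - pose proof (growth_bound Y (fun t => F2 b0 k Ls Ms (X t) (Y t)) (b0 * Ls) 0 (2 * T) HT2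
        (fun t Ht => proj2 (HD t Ht)) (fun t Ht => F2_le b0 k Ls Ms (X t) (Y t) Hk HLs HMs Hb (PY t ltac:(lra)))
        (cont_at_right0 Y HYc) t ltac:(lra)) as G.
      rewrite HY0, Rminus_0_r in G.
      assert (exp (b0 * Ls * t) <= exp (b0 * Ls * (2 * T))).
      { apply exp_le. apply Rmult_le_compat_l; [apply Rmult_le_pos|]; lra. }
      assert (y0 * exp (b0 * Ls * t) <= y0 * exp (b0 * Ls * (2 * T))) by (apply Rmult_le_compat_l; lra).
      unfold Ms, MsOf. fold Ls. lra. }
  split; [exact HX0|]. split; [exact HY0|]. split; [exact HXc|]. split; [exact HYc|]. split.
  - intros t Ht. destruct (HD t Ht) as [D1 D2].
    assert (E1 : sg Ls (X t) = X t) by (apply sg_id; split; [apply PX|left; apply UX]; lra).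
    assert (E2 : sg Ms (Y t) = Y t) by (apply sg_id; split; [apply PY|left; apply UY]; lra).
    split.
    + eapply d_eq; [exact D1|]. unfold F1. rewrite E1, E2. req.
    + eapply d_eq; [exact D2|]. unfold F2. rewrite E1, E2. req.
  - intros t Ht. split; [apply PX|apply PY]; auto.
Qed.

End B8.
Import B8.

Module B9.
Open Scope R_scope.

Lemma Int_part_eq r (z : Z) : IZR z <= r < IZR z + 1 -> Int_part r = z.
Proof.
  intros [H1 H2]. unfold Int_part.
  assert (up r = (z + 1)%Z).
  { symmetry. apply tech_up; rewrite plus_IZR; simpl; lra. }
  rewrite H. ring.
Qed.

Definition nidx (T t : R) : nat := Z.to_nat (Int_part (t / T)).

Lemma nidx_eq T n t : 0 < T -> INR n * T <= t < INR n * T + T -> nidx T t = n.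
Proof.
  intros HT Ht. unfold nidx.
  rewrite (Int_part_eq (t / T) (Z.of_nat n)). apply Nat2Z.id.
  rewrite <- INR_IZR_INZ. split.
  - apply (Rmult_le_reg_r T); auto. unfold Rdiv. rewrite Rmult_assoc, Rinv_l, Rmult_1_r by lra. lra.
  - apply (Rmult_lt_reg_r T); auto. unfold Rdiv. rewrite Rmult_assoc, Rinv_l, Rmult_1_r by lra. lra.
Qed.

Section Glue.
Variables (A b0 sigma g p T x0 y0 : R).
Hypotheses (HA : 0 < A) (Hb : 0 < b0) (Hk : 0 < sigma + g) (HT : 0 < T) (Hp : 0 <= p <= 1)
  (Hx : 0 <= x0) (Hy : 0 <= y0).

Fixpoint init (n : nat) : R * R :=
  match n with
  | O => (x0, y0)
  | S m => let z := init m in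
      ((1 - p) * solX A b0 (sigma + g) T (fst z) (snd z) T, solY A b0 (sigma + g) T (fst z) (snd z) T)
  end.

Lemma init_nonneg n : 0 <= fst (init n) /\ 0 <= snd (init n).
Proof.
  induction n as [|n [IH1 IH2]]; simpl; [lra|].
  destruct (period_sol A b0 (sigma + g) T (fst (init n)) (snd (init n)) HA Hb Hk HT IH1 IH2)
    as [_ [_ [_ [_ [_ P]]]]].
  destruct (P T ltac:(lra)) as [P1 P2]. split; auto. apply Rmult_le_pos; lra.
Qed.

Definition gS t := let n := nidx T t in let z := init n in solX A b0 (sigma + g) T (fst z) (snd z) (t - INR n * T).
Definition gI t := let n := nidx T t in let z := init n in solY A b0 (sigma + g) T (fst z) (snd z) (t - INR n * T).

Lemma shift_right (gg h : R -> R) a c :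
  (forall s, a <= s < a + c -> gg s = h (s - a)) -> 0 < c -> continuous h 0 ->
  filterlim gg (at_right a) (locally (gg a)).
Proof.
  intros E Hc Hh. apply eps_right_lim. intros eps He.
  destruct (cont_lim_eps h 0 (h 0) Hh eps He) as [d [Hd Hs]].
  exists (Rmin d c). split; [apply Rmin_pos; lra|]. intros s Hs'.
  assert (Rmin d c <= d) by apply Rmin_l. assert (Rmin d c <= c) by apply Rmin_r.
  rewrite E by lra. rewrite (E a) by lra. rewrite Rminus_diag. apply Hs.
  rewrite Rminus_0_r, Rabs_right; lra.
Qed.

Lemma shift_left (gg h : R -> R) a c :
  (forall s, a < s < a + c -> gg s = h (s - a)) -> 0 < c -> continuous h c ->
  filterlim gg (at_left (a + c)) (locally (h c)).
Proof.
  intros E Hc Hh. apply eps_left_lim. intros eps He.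
  destruct (cont_lim_eps h c (h c) Hh eps He) as [d [Hd Hs]].
  exists (Rmin d c). split; [apply Rmin_pos; lra|]. intros s Hs'.
  assert (Rmin d c <= d) by apply Rmin_l. assert (Rmin d c <= c) by apply Rmin_r.
  rewrite E by lra. apply Hs. rewrite Rabs_left; lra.
Qed.

Lemma glue_sol : is_sol A b0 sigma g p T (x0, y0) gS gI.
Proof.
  assert (G0 : nidx T 0 = O) by (apply nidx_eq; simpl; lra).
  split; [|split].
  - unfold gS. rewrite G0. simpl. rewrite Rmult_0_l, Rminus_0_r.
    destruct (period_sol A b0 (sigma + g) T x0 y0 HA Hb Hk HT Hx Hy) as [E _]. exact E.
  - unfold gI. rewrite G0. simpl. rewrite Rmult_0_l, Rminus_0_r.
    destruct (period_sol A b0 (sigma + g) T x0 y0 HA Hb Hk HT Hx Hy) as [_ [E _]]. exact E.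
  - intros n a.
    destruct (init_nonneg n) as [Hz1 Hz2].
    destruct (period_sol A b0 (sigma + g) T (fst (init n)) (snd (init n)) HA Hb Hk HT Hz1 Hz2)
      as [X0 [Y0 [Xc [Yc [XD XP]]]]].
    set (X := solX A b0 (sigma + g) T (fst (init n)) (snd (init n))) in *.
    set (Y := solY A b0 (sigma + g) T (fst (init n)) (snd (init n))) in *.
    assert (Ha : 0 <= a) by (unfold a; apply Rmult_le_pos; [apply pos_INR|lra]).
    assert (ES : forall s, a <= s < a + T -> gS s = X (s - a)).
    { intros s Hs. unfold gS. rewrite (nidx_eq T n s HT Hs). reflexivity. }
    assert (EI : forall s, a <= s < a + T -> gI s = Y (s - a)).
    { intros s Hs. unfold gI. rewrite (nidx_eq T n s HT Hs). reflexivity. }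
    assert (HaT : nidx T (a + T) = S n).
    { apply nidx_eq; auto. rewrite S_INR. unfold a. lra. }
    assert (EaT : a + T - INR (S n) * T = 0) by (rewrite S_INR; unfold a; ring).
    split; [|split; [|split; [|split]]].
    + intros t Ht.
      assert (Hloc : forall (gg h : R -> R), (forall s, a <= s < a + T -> gg s = h (s - a)) ->
                locally t (fun s => h (s - a) = gg s)).
      { intros gg h Eg. set (e := Rmin (t - a) (a + T - t)). assert (0 < e) by (apply Rmin_pos; lra).
        exists (mkposreal e H). intros y Hy'. change (Rabs (y - t) < e) in Hy'. apply Rabs_def2 in Hy'.
        assert (e <= t - a) by apply Rmin_l. assert (e <= a + T - t) by apply Rmin_r.
        symmetry. apply Eg. lra. }
      destruct (XD (t - a) ltac:(lra)) as [D1 D2].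
      rewrite (ES t), (EI t) by lra.
      split.
      * apply (is_derive_ext_loc (fun s => X (s - a))); [apply Hloc; auto|].
        eapply d_eq. apply (is_derive_comp X (fun s => s - a) t); [exact D1|].
        eapply d_eq. apply (d_minus (fun s => s) (fun _ => a) t 1 0); [apply d_id|apply d_const].
        reflexivity. simpl. unfold scal; simpl; unfold mult; simpl. ring.
      * apply (is_derive_ext_loc (fun s => Y (s - a))); [apply Hloc; auto|].
        eapply d_eq. apply (is_derive_comp Y (fun s => s - a) t); [exact D2|].
        eapply d_eq. apply (d_minus (fun s => s) (fun _ => a) t 1 0); [apply d_id|apply d_const].
        reflexivity. simpl. unfold scal; simpl; unfold mult; simpl. ring.
    + apply (shift_right gS X a T); auto.
    + apply (shift_right gI Y a T); auto.
    + exists (X T). split.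
      * apply (shift_left gS X a T); auto. intros s Hs; apply ES; lra.
      * unfold gS. rewrite HaT, EaT.
        change (solX A b0 (sigma+g) T (fst (init (S n))) (snd (init (S n))) 0 = (1 - p) * X T).
        destruct (init_nonneg (S n)) as [Hw1 Hw2].
        destruct (period_sol A b0 (sigma + g) T (fst (init (S n))) (snd (init (S n))) HA Hb Hk HT Hw1 Hw2) as [W0 _].
        rewrite W0. reflexivity.
    + exists (Y T). split.
      * apply (shift_left gI Y a T); auto. intros s Hs; apply EI; lra.
      * unfold gI. rewrite HaT, EaT.
        change (solY A b0 (sigma+g) T (fst (init (S n))) (snd (init (S n))) 0 = Y T).
        destruct (init_nonneg (S n)) as [Hw1 Hw2].
        destruct (period_sol A b0 (sigma + g) T (fst (init (S n))) (snd (init (S n))) HA Hb Hk HT Hw1 Hw2) as [_ [W0 _]].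
        rewrite W0. reflexivity.
Qed.

End Glue.

End B9.
Import B9.

Module B10.
Open Scope R_scope.

Lemma right_of_locally (a : R) : filter_le (at_right a) (locally a).
Proof. intros P HP. destruct HP as [r Hr']. exists r. intros y Hy _. apply Hr'. exact Hy. Qed.
Lemma left_of_locally (a : R) : filter_le (at_left a) (locally a).
Proof. intros P HP. destruct HP as [r Hr']. exists r. intros y Hy _. apply Hr'. exact Hy. Qed.

Lemma lim_id_right a : filterlim (fun x : R => x) (at_right a) (locally a).
Proof. apply (filterlim_filter_le_1 (F := locally a)); [apply right_of_locally|apply filterlim_id]. Qed.
Lemma lim_id_left a : filterlim (fun x : R => x) (at_left a) (locally a).
Proof. apply (filterlim_filter_le_1 (F := locally a)); [apply left_of_locally|apply filterlim_id]. Qed.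

Lemma lim_inv {T} {F : (T -> Prop) -> Prop} {FF : Filter F} (f : T -> R) a :
  filterlim f F (locally a) -> a <> 0 -> filterlim (fun x => / f x) F (locally (/ a)).
Proof.
  intros Hf Ha. apply (lim_comp f Rinv a Hf). eapply derive_cpt.
  apply (d_inv (fun s => s) a 1 (d_id a) Ha).
Qed.

Lemma lim_ln {T} {F : (T -> Prop) -> Prop} {FF : Filter F} (f : T -> R) a :
  filterlim f F (locally a) -> 0 < a -> filterlim (fun x => ln (f x)) F (locally (ln a)).
Proof.
  intros Hf Ha. apply (lim_comp f ln a Hf). eapply derive_cpt.
  apply (is_derive_ln a Ha).
Qed.

Lemma lim_explin {T} {F : (T -> Prop) -> Prop} {FF : Filter F} (f : T -> R) c a :
  filterlim f F (locally a) -> filterlim (fun x => exp (c * f x)) F (locally (exp (c * a))).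
Proof. intros Hf. apply lim_exp. apply lim_mult; [apply lim_const|auto]. Qed.

Lemma growth_bound_left (f d : R -> R) (c a b l : R) : a < b ->
  (forall t, a < t < b -> is_derive f t (d t)) ->
  (forall t, a < t < b -> d t <= c * f t) ->
  filterlim f (at_right a) (locally (f a)) ->
  filterlim f (at_left b) (locally l) ->
  l <= f a * exp (c * (b - a)).
Proof.
  intros Hab Hd Hle Hr Hl.
  set (h := fun u => f u * exp (- c * u)).
  assert (Hh : l * exp (- c * b) <= h a).
  { apply (antimono_both h (fun u => d u * exp (- c * u) + f u * (- c * exp (- c * u))) a b (h a)); auto.
    - intros u Hu. unfold h. apply (d_mult f (fun s => exp (- c * s)) u (d u) (- c * exp (- c * u))); [apply Hd; auto|apply d_explin].
    - intros u Hu. specialize (Hle u Hu). pose proof (exp_pos (- c * u)).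
      replace (d u * exp (- c * u) + f u * (- c * exp (- c * u))) with ((d u - c * f u) * exp (- c * u)) by ring.
      apply Rmult_le_0_r; lra.
    - unfold h. apply lim_mult; auto. apply lim_explin. apply lim_id_right.
    - unfold h. apply lim_mult; auto. apply lim_explin. apply lim_id_left. }
  unfold h in Hh. pose proof (exp_pos (c * b)).
  assert (l * exp (- c * b) * exp (c * b) <= f a * exp (- c * a) * exp (c * b)) by (apply Rmult_le_compat_r; lra).
  rewrite Rmult_assoc, (Rmult_comm (exp (- c * b))), exp_mul_inv, Rmult_1_r in H0.
  rewrite Rmult_assoc, <- exp_plus in H0. replace (- c * a + c * b) with (c * (b - a)) in H0 by ring.
  exact H0.
Qed.

Lemma loc_bound (c : R -> R) a b :
  (forall t, a < t < b -> filterlim c (locally t) (locally (c t))) ->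
  filterlim c (at_right a) (locally (c a)) ->
  forall t, a <= t < b -> exists d M, 0 < d /\ forall s, t - d < s < t + d -> a < s < b -> Rabs (c s) <= M.
Proof.
  intros Hc Hr t Ht. destruct (Req_dec t a) as [->|h].
  - destruct (right_lim_eps c a (c a) Hr 1 Rlt_0_1) as [d [Hd Hs]].
    exists d, (Rabs (c a) + 1). split; auto. intros s H1 H2. specialize (Hs s ltac:(lra)).
    pose proof (Rabs_triang_inv (c s) (c a)). lra.
  - destruct (cont_lim_eps c t (c t) (Hc t ltac:(lra)) 1 Rlt_0_1) as [d [Hd Hs]].
    exists d, (Rabs (c t) + 1). split; auto. intros s H1 H2.
    specialize (Hs s ltac:(apply Rabs_def1; lra)).
    pose proof (Rabs_triang_inv (c s) (c t)). lra.
Qed.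

Section Per.
Variables (A b0 k a T : R) (S I : R -> R).
Hypotheses (HA : 0 < A) (Hb : 0 < b0) (Hk : 0 < k) (HT : 0 < T).
Hypothesis HD : forall t, a < t < a + T ->
  is_derive S t (S t * (A - S t) - b0 * I t * S t) /\ is_derive I t (b0 * I t * S t - k * I t).
Hypothesis HrS : filterlim S (at_right a) (locally (S a)).
Hypothesis HrI : filterlim I (at_right a) (locally (I a)).

Lemma HaT : a < a + T. Proof. lra. Qed.

Lemma S_cont t : a < t < a + T -> filterlim S (locally t) (locally (S t)).
Proof. intros. eapply derive_cont. apply (HD t H). Qed.
Lemma I_cont t : a < t < a + T -> filterlim I (locally t) (locally (I t)).
Proof. intros. eapply derive_cont. apply (HD t H). Qed.

Lemma S_sign_hyp : forall t, a <= t < a + T -> exists d M, 0 < d /\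
  forall s, t - d < s < t + d -> a < s < a + T ->
  Rabs (S s * (A - S s) - b0 * I s * S s) <= M * Rabs (S s).
Proof.
  intros t Ht.
  destruct (loc_bound (fun s => A - S s - b0 * I s) a (a + T)) with (t := t) as [d [M [Hd HM]]]; auto.
  - intros u Hu. apply (lim_minus (F := locally u)); [apply (lim_minus (F:=locally u)); [apply lim_const|apply S_cont; auto]|].
    apply (lim_mult (F:=locally u)); [apply lim_const|apply I_cont; auto].
  - apply lim_minus; [apply lim_minus; [apply lim_const|auto]|]. apply lim_mult; [apply lim_const|auto].
  - exists d, M. split; auto. intros s H1 H2. specialize (HM s H1 H2).
    replace (S s * (A - S s) - b0 * I s * S s) with ((A - S s - b0 * I s) * S s) by ring.
    rewrite Rabs_mult. apply Rmult_le_compat_r; auto. apply Rabs_pos.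
Qed.

Lemma I_sign_hyp : forall t, a <= t < a + T -> exists d M, 0 < d /\
  forall s, t - d < s < t + d -> a < s < a + T ->
  Rabs (b0 * I s * S s - k * I s) <= M * Rabs (I s).
Proof.
  intros t Ht.
  destruct (loc_bound (fun s => b0 * S s - k) a (a + T)) with (t := t) as [d [M [Hd HM]]]; auto.
  - intros u Hu. apply (lim_minus (F := locally u)); [|apply lim_const].
    apply (lim_mult (F:=locally u)); [apply lim_const|apply S_cont; auto].
  - apply lim_minus; [|apply lim_const]. apply lim_mult; [apply lim_const|auto].
  - exists d, M. split; auto. intros s H1 H2. specialize (HM s H1 H2).
    replace (b0 * I s * S s - k * I s) with ((b0 * S s - k) * I s) by ring.
    rewrite Rabs_mult. apply Rmult_le_compat_r; auto. apply Rabs_pos.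
Qed.

Lemma S_nonneg : 0 <= S a -> forall t, a <= t < a + T -> 0 <= S t.
Proof.
  apply (sign_nonneg S (fun s => S s * (A - S s) - b0 * I s * S s) a (a + T) HaT); auto.
  - intros t Ht. apply HD; auto.
  - exact S_sign_hyp.
Qed.

Lemma S_pos : 0 < S a -> forall t, a <= t < a + T -> 0 < S t.
Proof.
  apply (sign_pos S (fun s => S s * (A - S s) - b0 * I s * S s) a (a + T) HaT); auto.
  - intros t Ht. apply HD; auto.
  - exact S_sign_hyp.
Qed.

Lemma I_nonneg : 0 <= I a -> forall t, a <= t < a + T -> 0 <= I t.
Proof.
  apply (sign_nonneg I (fun s => b0 * I s * S s - k * I s) a (a + T) HaT); auto.
  - intros t Ht. apply HD; auto.
  - exact I_sign_hyp.
Qed.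

Lemma per1 lS lI : 0 <= S a -> 0 <= I a ->
  filterlim S (at_left (a + T)) (locally lS) -> filterlim I (at_left (a + T)) (locally lI) ->
  0 <= lS /\ lS <= S a * exp (A * T) /\ 0 <= lI /\
  (b0 * (S a * exp (A * T)) <= k / 2 -> lI <= I a * exp (- (k / 2) * T)).
Proof.
  intros HS HI HlS HlI.
  pose proof (S_nonneg HS) as PS. pose proof (I_nonneg HI) as PI.
  assert (HSd : forall t, a < t < a + T -> S t * (A - S t) - b0 * I t * S t <= A * S t).
  { intros t Ht. specialize (PS t ltac:(lra)). specialize (PI t ltac:(lra)).
    assert (0 <= S t * S t) by nra. assert (0 <= b0 * I t * S t) by (apply Rmult_le_pos; [apply Rmult_le_pos|]; lra).
    nra. }
  assert (Sup : forall t, a < t < a + T -> S t <= S a * exp (A * T)).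
  { intros t Ht. pose proof (growth_bound S (fun s => S s * (A - S s) - b0 * I s * S s) A a (a + T) HaT
      (fun t Ht => proj1 (HD t Ht)) HSd HrS t Ht).
    assert (exp (A * (t - a)) <= exp (A * T)) by (apply exp_le; nra).
    assert (S a * exp (A * (t - a)) <= S a * exp (A * T)) by (apply Rmult_le_compat_l; lra). lra. }
  split; [|split; [|split]].
  - apply (left_lim_ge S (a + T) lS 0 T); auto. intros s Hs. apply PS; lra.
  - pose proof (growth_bound_left S (fun s => S s * (A - S s) - b0 * I s * S s) A a (a + T) lS HaT
      (fun t Ht => proj1 (HD t Ht)) HSd HrS HlS). replace (a + T - a) with T in H by ring. exact H.
  - apply (left_lim_ge I (a + T) lI 0 T); auto. intros s Hs. apply PI; lra.
  - intros Hsm.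
    pose proof (growth_bound_left I (fun s => b0 * I s * S s - k * I s) (- (k / 2)) a (a + T) lI HaT
      (fun t Ht => proj2 (HD t Ht))) as G.
    replace (a + T - a) with T in G by ring. apply G; auto.
    intros t Ht. specialize (PI t ltac:(lra)). specialize (Sup t Ht).
    assert (b0 * S t <= k / 2) by (eapply Rle_trans; [|exact Hsm]; apply Rmult_le_compat_l; lra).
    replace (b0 * I t * S t - k * I t) with (I t * (b0 * S t - k)) by ring.
    replace (- (k / 2) * I t) with (I t * (- (k / 2))) by ring.
    apply Rmult_le_compat_l; lra.
Qed.

End Per.

End B10.
Import B10.

Module B11.
Open Scope R_scope.

Ltac rfield := cbv beta; match goal with |- @eq _ ?a ?b => change (@eq R a b) end; field.

Lemma inv_le_cancel x y : 0 < x -> 0 < y -> / y <= / x -> x <= y.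
Proof.
  intros Hx Hy H. destruct (Rle_or_lt x y) as [h|h]; auto.
  apply Rinv_lt_contravar in h; [lra|]. nra.
Qed.

Lemma inv_le_inv x y : 0 < x -> x <= y -> / y <= / x.
Proof. intros Hx H. apply Rinv_le_contravar; auto. Qed.

Lemma exp_div_ge u v c t a : v * exp (c * a) <= u * exp (c * t) -> v * exp (- c * (t - a)) <= u.
Proof.
  intros H. pose proof (exp_pos (- c * t)).
  assert (v * exp (c * a) * exp (- c * t) <= u * exp (c * t) * exp (- c * t)) by (apply Rmult_le_compat_r; lra).
  rewrite (Rmult_assoc u), exp_mul_inv, Rmult_1_r in H1. rewrite (Rmult_assoc v), <- exp_plus in H1.
  replace (c * a + - c * t) with (- c * (t - a)) in H1 by ring. exact H1.
Qed.

Lemma exp_div_le u v c t a : u * exp (c * t) <= v * exp (c * a) -> u <= v * exp (- c * (t - a)).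
Proof.
  intros H. pose proof (exp_pos (- c * t)).
  assert (u * exp (c * t) * exp (- c * t) <= v * exp (c * a) * exp (- c * t)) by (apply Rmult_le_compat_r; lra).
  rewrite (Rmult_assoc u), exp_mul_inv, Rmult_1_r in H1. rewrite (Rmult_assoc v), <- exp_plus in H1.
  replace (c * a + - c * t) with (- c * (t - a)) in H1 by ring. exact H1.
Qed.

Section Per2.
Variables (A b0 k a T : R) (S I : R -> R).
Hypotheses (HA : 0 < A) (Hb : 0 < b0) (Hk : 0 < k) (HT : 0 < T).
Hypothesis HD : forall t, a < t < a + T ->
  is_derive S t (S t * (A - S t) - b0 * I t * S t) /\ is_derive I t (b0 * I t * S t - k * I t).
Hypothesis HrS : filterlim S (at_right a) (locally (S a)).
Hypothesis HrI : filterlim I (at_right a) (locally (I a)).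
Hypothesis HS0 : 0 < S a.
Hypothesis HI0 : 0 <= I a.

Definition Sig := Rmax (S a) A.
Definition Ibar := I a * exp (b0 * Sig * T).
Definition Wbar := Rmax (/ S a) (2 / A).

Hypothesis Hsmall : b0 * Ibar <= A / 2.

Lemma PS t : a <= t < a + T -> 0 < S t.
Proof. apply (S_pos A b0 k a T S I HT HD HrS HrI HS0). Qed.
Lemma PI t : a <= t < a + T -> 0 <= I t.
Proof. apply (I_nonneg A b0 k a T S I HT HD HrS HrI HI0). Qed.

Lemma HaT2 : a < a + T. Proof. lra. Qed.

Definition h1 t := (/ S t - / A) * exp (A * t).

Lemma h1_derive t : a < t < a + T -> is_derive h1 t (exp (A * t) * (b0 * I t / S t)).
Proof.
  intros Ht. destruct (HD t Ht) as [D1 _]. pose proof (PS t ltac:(lra)).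
  unfold h1. eapply d_eq.
  - apply (d_mult (fun s => / S s - / A) (fun s => exp (A * s)) t
      (- (S t * (A - S t) - b0 * I t * S t) / (S t * S t) - 0) (A * exp (A * t))).
    + apply (d_minus (fun s => / S s) (fun _ => / A)); [apply d_inv; auto; lra|apply d_const].
    + apply d_explin.
  - rfield. lra.
Qed.

Lemma h1_rlim : filterlim h1 (at_right a) (locally (h1 a)).
Proof.
  unfold h1. apply lim_mult; [apply lim_minus; [apply lim_inv; auto; lra|apply lim_const]|].
  apply lim_explin. apply lim_id_right.
Qed.

Lemma h1_mono t : a < t < a + T -> h1 a <= h1 t.
Proof.
  intros Ht. apply (mono_right h1 (fun t => exp (A * t) * (b0 * I t / S t)) a (a + T) (h1 a)); auto.
  - apply h1_derive.
  - intros u Hu. pose proof (PS u ltac:(lra)). pose proof (PI u ltac:(lra)). pose proof (exp_pos (A * u)).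
    apply Rmult_le_pos; [lra|]. apply Rdiv_le_0_compat; [apply Rmult_le_pos|]; lra.
  - apply h1_rlim.
Qed.

Lemma S_le_Sig t : a <= t < a + T -> S t <= Sig.
Proof.
  intros Ht. destruct (Req_dec t a) as [->|h]. unfold Sig. apply Rmax_l.
  pose proof (h1_mono t ltac:(lra)) as M. unfold h1 in M.
  apply exp_div_ge in M.
  pose proof (PS t ltac:(lra)).
  assert (E1 : 0 < exp (- A * (t - a)) <= 1).
  { split; [apply exp_pos|]. rewrite <- exp_0. apply exp_le. nra. }
  unfold Sig. destruct (Rle_or_lt (/ A) (/ S a)) as [c|c].
  - assert (0 <= (/ S a - / A) * exp (- A * (t - a))) by (apply Rmult_le_pos; lra).
    assert (Q : / A <= / S t) by lra. apply inv_le_cancel in Q; auto.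
    eapply Rle_trans; [exact Q|apply Rmax_r].
  - assert ((/ S a - / A) <= (/ S a - / A) * exp (- A * (t - a))).
    { replace ((/ S a - / A) * exp (- A * (t - a))) with (- ((/ A - / S a) * exp (- A * (t - a)))) by ring.
      assert ((/ A - / S a) * exp (- A * (t - a)) <= (/ A - / S a)).
      { rewrite <- (Rmult_1_r (/ A - / S a)) at 2. apply Rmult_le_compat_l; lra. }
      lra. }
    assert (Q : / S a <= / S t) by lra. apply inv_le_cancel in Q; auto.
    eapply Rle_trans; [exact Q|apply Rmax_l].
Qed.

Lemma Sig_pos : 0 < Sig.
Proof. unfold Sig. eapply Rlt_le_trans; [exact HA|apply Rmax_r]. Qed.

Lemma I_le_Ibar t : a < t < a + T -> I t <= Ibar.
Proof.
  intros Ht.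
  pose proof (growth_bound I (fun s => b0 * I s * S s - k * I s) (b0 * Sig) a (a + T) HaT2
      (fun t Ht => proj2 (HD t Ht))) as G.
  assert (I t <= I a * exp (b0 * Sig * (t - a))).
  { apply G; auto. intros u Hu. pose proof (PI u ltac:(lra)). pose proof (S_le_Sig u ltac:(lra)).
    replace (b0 * I u * S u - k * I u) with (I u * (b0 * S u) - k * I u) by ring.
    assert (I u * (b0 * S u) <= I u * (b0 * Sig)) by (apply Rmult_le_compat_l; auto; apply Rmult_le_compat_l; lra).
    assert (0 <= k * I u) by (apply Rmult_le_pos; lra). lra. }
  unfold Ibar. eapply Rle_trans; [exact H|]. apply Rmult_le_compat_l; auto.
  apply exp_le. pose proof Sig_pos. assert (0 <= b0 * Sig) by (apply Rmult_le_pos; lra).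
  apply Rmult_le_compat_l; lra.
Qed.

Definition h3 t := (/ S t - 2 / A) * exp (A / 2 * t).

Lemma h3_derive t : a < t < a + T -> is_derive h3 t (exp (A / 2 * t) * ((b0 * I t - A / 2) / S t)).
Proof.
  intros Ht. destruct (HD t Ht) as [D1 _]. pose proof (PS t ltac:(lra)).
  unfold h3. eapply d_eq.
  - apply (d_mult (fun s => / S s - 2 / A) (fun s => exp (A / 2 * s)) t
      (- (S t * (A - S t) - b0 * I t * S t) / (S t * S t) - 0) (A / 2 * exp (A / 2 * t))).
    + apply (d_minus (fun s => / S s) (fun _ => 2 / A)); [apply d_inv; auto; lra|apply d_const].
    + apply d_explin.
  - rfield. lra.
Qed.

Lemma Wbar_pos : 0 < Wbar.
Proof. unfold Wbar. eapply Rlt_le_trans; [|apply Rmax_r]. apply Rdiv_lt_0_compat; lra. Qed.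

Lemma invS_le_Wbar t : a <= t < a + T -> / S t <= Wbar.
Proof.
  intros Ht. destruct (Req_dec t a) as [->|h]. unfold Wbar. apply Rmax_l.
  assert (M : h3 t <= h3 a).
  { apply (antimono_right h3 (fun t => exp (A / 2 * t) * ((b0 * I t - A / 2) / S t)) a (a + T) (h3 a)); [| | |lra].
    - apply h3_derive.
    - intros u Hu. pose proof (PS u ltac:(lra)). pose proof (I_le_Ibar u Hu). pose proof (exp_pos (A / 2 * u)).
      assert (b0 * I u <= b0 * Ibar) by (apply Rmult_le_compat_l; lra).
      assert ((b0 * I u - A / 2) / S u <= 0).
      { unfold Rdiv. apply Rmult_le_0_r; [lra|]. left; apply Rinv_0_lt_compat; lra. }
      rewrite Rmult_comm. apply Rmult_le_0_r; lra.
    - unfold h3. apply lim_mult; [apply lim_minus; [apply lim_inv; auto; lra|apply lim_const]|].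
      apply lim_explin. apply lim_id_right. }
  unfold h3 in M. apply exp_div_le in M.
  assert (E1 : 0 < exp (- (A / 2) * (t - a)) <= 1).
  { split; [apply exp_pos|]. rewrite <- exp_0. apply exp_le. nra. }
  unfold Wbar. destruct (Rle_or_lt (2 / A) (/ S a)) as [c|c].
  - assert ((/ S a - 2 / A) * exp (- (A / 2) * (t - a)) <= (/ S a - 2 / A)).
    { rewrite <- (Rmult_1_r (/ S a - 2 / A)) at 2. apply Rmult_le_compat_l; lra. }
    eapply Rle_trans; [|apply Rmax_l]. lra.
  - assert ((/ S a - 2 / A) * exp (- (A / 2) * (t - a)) <= 0) by (apply Rmult_le_0_r; lra).
    eapply Rle_trans; [|apply Rmax_r]. lra.
Qed.

Lemma S_ge_Wbar t : a <= t < a + T -> / Wbar <= S t.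
Proof.
  intros Ht. pose proof (PS t Ht). pose proof (invS_le_Wbar t Ht). pose proof Wbar_pos.
  rewrite <- (Rinv_inv (S t)). apply Rinv_le_contravar; auto. apply Rinv_0_lt_compat; auto.
Qed.


Variables (lS lI : R).
Hypothesis HlS : filterlim S (at_left (a + T)) (locally lS).
Hypothesis HlI : filterlim I (at_left (a + T)) (locally lI).

Lemma o1 : / Wbar <= lS /\ 0 <= lI.
Proof.
  split.
  - apply (left_lim_ge S (a + T) lS (/ Wbar) T); auto. intros s Hs. apply S_ge_Wbar; lra.
  - apply (left_lim_ge I (a + T) lI 0 T); auto. intros s Hs. apply PI; lra.
Qed.

Lemma lS_pos : 0 < lS.
Proof. destruct o1. pose proof Wbar_pos. pose proof (Rinv_0_lt_compat _ H1). lra. Qed.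

Lemma h1_llim : filterlim h1 (at_left (a + T)) (locally ((/ lS - / A) * exp (A * (a + T)))).
Proof.
  unfold h1. apply lim_mult; [apply lim_minus; [apply lim_inv; auto; pose proof lS_pos; lra|apply lim_const]|].
  apply lim_explin. apply lim_id_left.
Qed.

Lemma o2 : (/ S a - / A) * exp (- A * T) <= / lS - / A.
Proof.
  assert (M : h1 a <= (/ lS - / A) * exp (A * (a + T))).
  { apply (mono_both h1 (fun t => exp (A * t) * (b0 * I t / S t)) a (a + T)); auto.
    - lra.
    - apply h1_derive.
    - intros u Hu. pose proof (PS u ltac:(lra)). pose proof (PI u ltac:(lra)). pose proof (exp_pos (A * u)).
      apply Rmult_le_pos; [lra|]. apply Rdiv_le_0_compat; [apply Rmult_le_pos|]; lra.
    - apply h1_rlim.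
    - apply h1_llim. }
  unfold h1 in M. apply exp_div_ge in M. replace (a + T - a) with T in M by ring. exact M.
Qed.

Lemma o3 : / lS - / A <= (/ S a - / A) * exp (- A * T) + T * (b0 * (Ibar * Wbar)).
Proof.
  set (E := exp (A * (a + T))). set (D := E * (b0 * (Ibar * Wbar))).
  set (h4 := fun t => h1 t - D * t).
  assert (M : (/ lS - / A) * E - D * (a + T) <= h4 a).
  { apply (antimono_both h4 (fun t => exp (A * t) * (b0 * I t / S t) - D) a (a + T)); [lra| | | |].
    - intros u Hu. unfold h4. eapply d_eq. apply (d_minus h1 (fun t => D * t)); [apply h1_derive; auto|apply d_lin]. reflexivity.
    - intros u Hu. pose proof (PS u ltac:(lra)). pose proof (PI u ltac:(lra)).
      pose proof (I_le_Ibar u Hu). pose proof (invS_le_Wbar u ltac:(lra)).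
      assert (0 <= / S u) by (left; apply Rinv_0_lt_compat; auto).
      assert (I u * / S u <= Ibar * Wbar) by (apply Rmult_le_compat; auto).
      assert (0 <= I u * / S u) by (apply Rmult_le_pos; auto).
      assert (b0 * (I u * / S u) <= b0 * (Ibar * Wbar)) by (apply Rmult_le_compat_l; lra).
      assert (exp (A * u) <= E) by (unfold E; apply exp_le; nra).
      assert (exp (A * u) * (b0 * (I u * / S u)) <= E * (b0 * (Ibar * Wbar))).
      { apply Rmult_le_compat; auto. left; apply exp_pos. apply Rmult_le_pos; lra. }
      unfold D. replace (b0 * I u / S u) with (b0 * (I u * / S u)) by (unfold Rdiv; ring). lra.
    - unfold h4. apply lim_minus; [apply h1_rlim|]. apply lim_mult; [apply lim_const|apply lim_id_right].
    - unfold h4. apply lim_minus; [apply h1_llim|]. apply lim_mult; [apply lim_const|apply lim_id_left]. }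
  unfold h4, h1 in M.
  assert (Q : (/ lS - / A) * E <= (/ S a - / A) * exp (A * a) + D * T) by lra.
  pose proof (exp_pos (- A * (a + T))) as P.
  assert (Q2 : (/ lS - / A) * E * exp (- A * (a + T)) <= ((/ S a - / A) * exp (A * a) + D * T) * exp (- A * (a + T)))
    by (apply Rmult_le_compat_r; lra).
  unfold E in Q2. rewrite (Rmult_assoc (/ lS - / A)), exp_mul_inv, Rmult_1_r in Q2.
  replace (((/ S a - / A) * exp (A * a) + D * T) * exp (- A * (a + T)))
    with ((/ S a - / A) * (exp (A * a) * exp (- A * (a + T))) + T * (b0 * (Ibar * Wbar)) * (exp (A * (a + T)) * exp (- A * (a + T)))) in Q2
    by (unfold D, E; ring).
  rewrite exp_mul_inv, <- exp_plus in Q2. replace (A * a + - A * (a + T)) with (- A * T) in Q2 by ring. lra.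
Qed.

Definition cJ := b0 * A - k.
Definition J t := I t * exp (b0 * ln (S t) - cJ * t).

Lemma J_derive t : a < t < a + T -> is_derive J t (- (b0 * b0) * (I t * I t) * exp (b0 * ln (S t) - cJ * t)).
Proof.
  intros Ht. destruct (HD t Ht) as [D1 D2]. pose proof (PS t ltac:(lra)).
  unfold J. eapply d_eq.
  - eapply (d_mult I (fun s => exp (b0 * ln (S s) - cJ * s)) t); [exact D2|].
    apply (d_exp (fun s => b0 * ln (S s) - cJ * s)).
    apply (d_minus (fun s => b0 * ln (S s)) (fun s => cJ * s)); [|apply d_lin].
    apply (is_derive_scal (fun s => ln (S s))). apply d_ln; [exact D1|auto].
  - unfold cJ. rfield. lra.
Qed.

Lemma o4 : lI * exp (b0 * ln lS) <= exp (cJ * T) * (I a * exp (b0 * ln (S a))).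
Proof.
  pose proof lS_pos as HlSp.
  assert (M : lI * exp (b0 * ln lS - cJ * (a + T)) <= J a).
  { apply (antimono_both J (fun t => - (b0 * b0) * (I t * I t) * exp (b0 * ln (S t) - cJ * t)) a (a + T)); [lra| | | |].
    - apply J_derive.
    - intros u Hu. pose proof (exp_pos (b0 * ln (S u) - cJ * u)).
      assert (0 <= b0 * b0 * (I u * I u)) by (apply Rmult_le_pos; nra).
      replace (- (b0 * b0) * (I u * I u) * exp (b0 * ln (S u) - cJ * u))
        with (- (b0 * b0 * (I u * I u) * exp (b0 * ln (S u) - cJ * u))) by ring.
      assert (0 <= b0 * b0 * (I u * I u) * exp (b0 * ln (S u) - cJ * u)) by (apply Rmult_le_pos; lra). lra.
    - unfold J. apply lim_mult; auto. apply lim_exp. apply lim_minus.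
      + apply lim_mult; [apply lim_const|]. apply lim_ln; auto.
      + apply lim_mult; [apply lim_const|apply lim_id_right].
    - apply lim_mult; auto. apply lim_exp. apply lim_minus.
      + apply lim_mult; [apply lim_const|]. apply lim_ln; auto.
      + apply lim_mult; [apply lim_const|apply lim_id_left]. }
  unfold J in M. pose proof (exp_pos (cJ * (a + T))).
  assert (Q : lI * exp (b0 * ln lS - cJ * (a + T)) * exp (cJ * (a + T)) <= I a * exp (b0 * ln (S a) - cJ * a) * exp (cJ * (a + T)))
    by (apply Rmult_le_compat_r; lra).
  rewrite !Rmult_assoc, <- !exp_plus in Q.
  replace (b0 * ln lS - cJ * (a + T) + cJ * (a + T)) with (b0 * ln lS) in Q by ring.
  replace (b0 * ln (S a) - cJ * a + cJ * (a + T)) with (b0 * ln (S a) + cJ * T) in Q by ring.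
  rewrite exp_plus in Q. lra.
Qed.

End Per2.

End B11.
Import B11.

Module B12.
Open Scope R_scope.

Lemma ln_le' x y : 0 < x -> x <= y -> ln x <= ln y.
Proof. intros Hx [h|h]. left; apply ln_increasing; auto. subst; lra. Qed.

Lemma pow_le1 x n : 0 <= x <= 1 -> x ^ n <= 1.
Proof. intros H. rewrite <- (pow1 n). apply pow_incr. lra. Qed.

Lemma abs_between e' l e D : 0 <= l -> 0 <= D -> l * e <= e' <= l * e + D -> Rabs e' <= l * Rabs e + D.
Proof.
  intros Hl HD H. apply abs_le_intro.
  pose proof (Rle_abs e). pose proof (Rle_abs (- e)). rewrite Rabs_Ropp in H1.
  assert (l * e <= l * Rabs e) by (apply Rmult_le_compat_l; auto).
  assert (l * (- e) <= l * Rabs e) by (apply Rmult_le_compat_l; auto).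
  lra.
Qed.

Section Alg2.
Variables (A b0 k p T : R).
Hypotheses (HA : 0 < A) (Hb : 0 < b0) (Hk : 0 < k) (HT : 0 < T) (Hp0 : 0 <= p) (Hp1 : p < 1).
Hypothesis Hlam : exp (- A * T) < 1 - p.
Hypothesis Hq : (b0 * A - k) * T + b0 * ln (1 - p) < 0.

Definition EA := exp (- A * T).
Definition lam := EA / (1 - p).
Definition ws := (1 - EA) / (A * ((1 - p) - EA)).
Definition qq := exp ((b0 * A - k) * T + b0 * ln (1 - p)).
Definition mu := (1 + Rmax lam qq) / 2.
Definition xhi := 2 / ws.
Definition xlo := 2 / (3 * ws).
Definition Gam := exp (b0 * (ln xhi - ln xlo)).
Definition Sgm := Rmax xhi A.
Definition Eb := exp (b0 * Sgm * T).
Definition Om := Rmax (3 * ws / 2) (2 / A).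
Definition C2 := T * b0 * Om * Gam * Eb / (1 - p).

Lemma EA_bounds : 0 < EA < 1.
Proof. unfold EA. split; [apply exp_pos|]. rewrite <- exp_0. apply exp_increasing. nra. Qed.

Lemma lam_bounds : 0 < lam < 1.
Proof.
  unfold lam. pose proof EA_bounds. split; [apply Rdiv_lt_0_compat; lra|].
  apply (Rmult_lt_reg_r (1 - p)); [lra|]. unfold Rdiv. rewrite Rmult_assoc, Rinv_l, Rmult_1_r by lra.
  fold EA in Hlam. lra.
Qed.

Lemma ws_pos : 0 < ws.
Proof.
  unfold ws. pose proof EA_bounds. fold EA in Hlam. apply Rdiv_lt_0_compat; [lra|]. apply Rmult_lt_0_compat; lra.
Qed.

Lemma fixpt : (1 - p) * ws = / A + (ws - / A) * EA.
Proof. unfold ws. pose proof EA_bounds. fold EA in Hlam. field. split; lra. Qed.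

Lemma qq_bounds : 0 < qq < 1.
Proof. unfold qq. split; [apply exp_pos|]. rewrite <- exp_0 at 2. apply exp_increasing. exact Hq. Qed.

Lemma mu_bounds : lam <= mu /\ qq < mu /\ mu < 1.
Proof.
  pose proof lam_bounds. pose proof qq_bounds. unfold mu.
  pose proof (Rmax_l lam qq). pose proof (Rmax_r lam qq).
  assert (Rmax lam qq < 1) by (apply Rmax_lub_lt; lra). lra.
Qed.

Lemma xlo_pos : 0 < xlo.
Proof. unfold xlo. pose proof ws_pos. apply Rdiv_lt_0_compat; lra. Qed.

Lemma Om_pos : 0 < Om.
Proof. unfold Om. eapply Rlt_le_trans; [|apply Rmax_r]. apply Rdiv_lt_0_compat; lra. Qed.

Lemma C2_pos : 0 <= C2.
Proof.
  unfold C2. pose proof Om_pos. pose proof (exp_pos (b0 * (ln xhi - ln xlo))). pose proof (exp_pos (b0 * Sgm * T)).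
  fold Gam Eb in H0, H1. apply Rmult_le_pos; [|left; apply Rinv_0_lt_compat; lra].
  repeat apply Rmult_le_pos; lra.
Qed.

Variables (x0 y0 : R).
Hypotheses (Hx0 : 0 < x0) (Hy0 : 0 <= y0).

Definition cc := C2 * y0 / (mu - qq).
Definition P0 := Rabs (/ x0 - ws) + cc.
Definition Zf x y := y * exp (b0 * ln x).

Hypothesis Hsm1 : P0 <= ws / 2.
Hypothesis Hsm2 : b0 * (y0 * Gam * Eb) <= A / 2.

Definition Inv n x y := 0 < x /\ 0 <= y /\ Rabs (/ x - ws) + cc * qq ^ n <= mu ^ n * P0 /\
  Zf x y <= qq ^ n * Zf x0 y0.

Lemma cc_pos : 0 <= cc.
Proof.
  unfold cc. pose proof C2_pos. pose proof mu_bounds. apply Rdiv_le_0_compat; [apply Rmult_le_pos|]; lra.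
Qed.

Lemma cc_eq : C2 * y0 + cc * qq = cc * mu.
Proof. unfold cc. pose proof mu_bounds. field. lra. Qed.

Lemma Inv0 : Inv 0 x0 y0.
Proof.
  unfold Inv. simpl. split; auto. split; auto. split; [unfold P0; lra|lra].
Qed.

Lemma w_range x : 0 < x -> Rabs (/ x - ws) <= ws / 2 -> xlo <= x <= xhi.
Proof.
  intros Hx H. apply abs_le_inv in H. pose proof ws_pos. unfold xlo, xhi.
  assert (ws / 2 <= / x) by lra. assert (/ x <= 3 * ws / 2) by lra.
  split.
  - replace (2 / (3 * ws)) with (/ (3 * ws / 2)) by (field; lra). rewrite <- (Rinv_inv x).
    apply Rinv_le_contravar; auto. apply Rinv_0_lt_compat; auto.
  - replace (2 / ws) with (/ (ws / 2)) by (field; lra). rewrite <- (Rinv_inv x).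
    apply Rinv_le_contravar; auto. lra.
Qed.

Lemma Inv_e n x y : Inv n x y -> Rabs (/ x - ws) <= P0.
Proof.
  intros [Hx [Hy [He _]]]. pose proof mu_bounds. pose proof qq_bounds. pose proof cc_pos.
  assert (mu ^ n <= 1) by (apply pow_le1; lra).
  assert (0 <= cc * qq ^ n) by (apply Rmult_le_pos; auto; apply pow_le; lra).
  assert (0 <= P0) by (unfold P0; pose proof (Rabs_pos (/ x0 - ws)); lra).
  assert (mu ^ n * P0 <= 1 * P0) by (apply Rmult_le_compat_r; auto). lra.
Qed.

Lemma Inv_x n x y : Inv n x y -> xlo <= x <= xhi.
Proof. intros H. apply w_range; [apply H|]. eapply Rle_trans; [apply (Inv_e n x y H)|exact Hsm1]. Qed.

Lemma Inv_y n x y : Inv n x y -> y <= qq ^ n * (y0 * Gam).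
Proof.
  intros H. pose proof (Inv_x n x y H) as [X1 X2]. pose proof (Inv_x 0 x0 y0 Inv0) as [X3 X4].
  destruct H as [Hx [Hy [_ HZ]]]. unfold Zf in HZ.
  pose proof xlo_pos.
  assert (E : y = y * exp (b0 * ln x) * exp (- (b0 * ln x))).
  { rewrite Rmult_assoc, <- exp_plus. replace (b0 * ln x + - (b0 * ln x)) with 0 by ring. rewrite exp_0. ring. }
  rewrite E. pose proof (exp_pos (- (b0 * ln x))).
  eapply Rle_trans. apply Rmult_le_compat_r; [lra|exact HZ].
  rewrite !Rmult_assoc. apply Rmult_le_compat_l; [apply pow_le; pose proof qq_bounds; lra|].
  rewrite <- exp_plus. unfold Gam. apply Rmult_le_compat_l; auto.
  apply exp_le.
  assert (ln x0 <= ln xhi) by (apply ln_le'; lra).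
  assert (ln xlo <= ln x) by (apply ln_le'; lra). nra.
Qed.

Lemma Inv_small n x y : Inv n x y -> b0 * (y * exp (b0 * Rmax x A * T)) <= A / 2.
Proof.
  intros H. pose proof (Inv_y n x y H). pose proof (Inv_x n x y H) as [_ X2]. destruct H as [Hx [Hy _]].
  pose proof qq_bounds. assert (qq ^ n <= 1) by (apply pow_le1; lra).
  assert (0 <= y0 * Gam) by (apply Rmult_le_pos; [lra|left; apply exp_pos]).
  assert (qq ^ n * (y0 * Gam) <= 1 * (y0 * Gam)) by (apply Rmult_le_compat_r; auto).
  assert (exp (b0 * Rmax x A * T) <= Eb).
  { unfold Eb. apply exp_le. apply Rmult_le_compat_r; [lra|]. apply Rmult_le_compat_l; [lra|].
    unfold Sgm. apply Rmax_lub; [eapply Rle_trans; [exact X2|apply Rmax_l]|apply Rmax_r]. }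
  assert (y * exp (b0 * Rmax x A * T) <= y0 * Gam * Eb).
  { apply Rmult_le_compat; auto. left; apply exp_pos. lra. }
  eapply Rle_trans; [|exact Hsm2]. apply Rmult_le_compat_l; lra.
Qed.


Lemma Inv_step n x y lS lI : Inv n x y -> 0 < lS -> 0 <= lI ->
  (/ x - / A) * exp (- A * T) <= / lS - / A ->
  / lS - / A <= (/ x - / A) * exp (- A * T) + T * (b0 * ((y * exp (b0 * Rmax x A * T)) * Rmax (/ x) (2 / A))) ->
  lI * exp (b0 * ln lS) <= exp ((b0 * A - k) * T) * (y * exp (b0 * ln x)) ->
  Inv (S n) ((1 - p) * lS) lI.
Proof.
  intros HI HlS HlI Lo Up HZ.
  pose proof (Inv_y n x y HI) as Hyb. pose proof (Inv_x n x y HI) as [X1 X2].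
  pose proof (Inv_e n x y HI) as He.
  destruct HI as [Hx [Hy [HP HZn]]].
  pose proof EA_bounds as HEA. fold EA in Lo, Up. pose proof fixpt as FP.
  pose proof qq_bounds as Hqq. pose proof mu_bounds as [M1 [M2 M3]]. pose proof lam_bounds as HL.
  pose proof cc_pos as Hcc. pose proof C2_pos as HC2. pose proof ws_pos as Hws.
  set (Ib := y * exp (b0 * Rmax x A * T)). set (Wb := Rmax (/ x) (2 / A)). fold Ib Wb in Up.
  set (D := T * (b0 * (Ib * Wb))).
  assert (HIb : 0 <= Ib) by (unfold Ib; apply Rmult_le_pos; [lra|left; apply exp_pos]).
  assert (HWb : 0 < Wb) by (unfold Wb; eapply Rlt_le_trans; [|apply Rmax_r]; apply Rdiv_lt_0_compat; lra).
  assert (HD0 : 0 <= D) by (unfold D; apply Rmult_le_pos; [lra|]; apply Rmult_le_pos; [lra|]; apply Rmult_le_pos; lra).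
  set (e := / x - ws). set (e' := / ((1 - p) * lS) - ws).
  assert (Ee' : (1 - p) * e' = (/ lS - / A) - (ws - / A) * EA).
  { unfold e'. rewrite Rmult_minus_distr_l, FP. field. split; lra. }
  assert (B1 : lam * e <= e').
  { apply (Rmult_le_reg_l (1 - p)); [lra|]. rewrite Ee'. unfold lam, e.
    replace ((1 - p) * (EA / (1 - p) * (/ x - ws))) with ((/ x - / A) * EA - (ws - / A) * EA) by (field; lra).
    lra. }
  assert (B2 : e' <= lam * e + D / (1 - p)).
  { apply (Rmult_le_reg_l (1 - p)); [lra|]. rewrite Ee'. unfold lam, e.
    replace ((1 - p) * (EA / (1 - p) * (/ x - ws) + D / (1 - p))) with ((/ x - / A) * EA - (ws - / A) * EA + D) by (field; lra).
    unfold D. lra. }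
  assert (HDp : 0 <= D / (1 - p)) by (apply Rdiv_le_0_compat; lra).
  pose proof (abs_between e' lam e (D / (1 - p)) ltac:(lra) HDp (conj B1 B2)) as Ae.
  assert (HWbO : Wb <= Om).
  { unfold Wb, Om. apply Rmax_lub; [|apply Rmax_r]. eapply Rle_trans; [|apply Rmax_l].
    apply abs_le_inv in He. pose proof Hsm1 as HS1. unfold e in He. lra. }
  assert (HIbB : Ib <= qq ^ n * y0 * Gam * Eb).
  { unfold Ib. replace (qq ^ n * y0 * Gam * Eb) with ((qq ^ n * (y0 * Gam)) * Eb) by ring.
    apply Rmult_le_compat; auto. left; apply exp_pos.
    unfold Eb. apply exp_le. apply Rmult_le_compat_r; [lra|]. apply Rmult_le_compat_l; [lra|].
    unfold Sgm. apply Rmax_lub; [eapply Rle_trans; [exact X2|apply Rmax_l]|apply Rmax_r]. }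
  assert (HDb : D / (1 - p) <= C2 * y0 * qq ^ n).
  { unfold D, C2.
    assert (Ib * Wb <= (qq ^ n * y0 * Gam * Eb) * Om) by (apply Rmult_le_compat; lra).
    assert (T * (b0 * (Ib * Wb)) <= T * (b0 * ((qq ^ n * y0 * Gam * Eb) * Om))).
    { apply Rmult_le_compat_l; [lra|]. apply Rmult_le_compat_l; lra. }
    replace (T * b0 * Om * Gam * Eb / (1 - p) * y0 * qq ^ n) with (T * (b0 * ((qq ^ n * y0 * Gam * Eb) * Om)) / (1 - p)) by (field; lra).
    unfold Rdiv. apply Rmult_le_compat_r; [left; apply Rinv_0_lt_compat; lra|lra]. }
  split; [apply Rmult_lt_0_compat; lra|]. split; auto. split.
  - fold e'. simpl pow.
    assert (lam * Rabs e <= mu * Rabs e) by (apply Rmult_le_compat_r; [apply Rabs_pos|lra]).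
    assert (E2 : C2 * y0 * qq ^ n + cc * (qq * qq ^ n) = mu * (cc * qq ^ n)).
    { pose proof cc_eq. replace (C2 * y0 * qq ^ n + cc * (qq * qq ^ n)) with ((C2 * y0 + cc * qq) * qq ^ n) by ring.
      rewrite H0. ring. }
    assert (mu * (Rabs e + cc * qq ^ n) <= mu * (mu ^ n * P0)) by (apply Rmult_le_compat_l; [lra|exact HP]).
    fold e in HP. lra.
  - unfold Zf in *. simpl pow.
    rewrite ln_mult by lra. rewrite Rmult_plus_distr_l, exp_plus.
    assert (Q : lI * exp (b0 * ln lS) * exp (b0 * ln (1 - p)) <=
                exp ((b0 * A - k) * T) * (y * exp (b0 * ln x)) * exp (b0 * ln (1 - p)))
      by (apply Rmult_le_compat_r; [left; apply exp_pos|exact HZ]).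
    assert (E3 : exp ((b0 * A - k) * T) * (y * exp (b0 * ln x)) * exp (b0 * ln (1 - p)) = qq * (y * exp (b0 * ln x))).
    { unfold qq. rewrite exp_plus. ring. }
    assert (qq * (y * exp (b0 * ln x)) <= qq * (qq ^ n * (y0 * exp (b0 * ln x0)))) by (apply Rmult_le_compat_l; lra).
    replace (lI * (exp (b0 * ln (1 - p)) * exp (b0 * ln lS))) with (lI * exp (b0 * ln lS) * exp (b0 * ln (1 - p))) by ring.
    lra.
Qed.

End Alg2.

End B12.
Import B12.

Module B13.
Open Scope R_scope.

Lemma locally_pair_eps (x y : R) (V : R * R -> Prop) : locally (x, y) V ->
  exists eps, 0 < eps /\ forall u v, Rabs (u - x) < eps -> Rabs (v - y) < eps -> V (u, v).
Proof.
  intros [e He]. exists e. split; [apply cond_pos|]. intros u v H1 H2. apply He. split; assumption.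
Qed.

Lemma pair_box_locally x y d : 0 < d -> locally (x, y) (fun z => Rabs (fst z - x) < d /\ Rabs (snd z - y) < d).
Proof.
  intros Hd. exists (mkposreal d Hd). intros [u v] [H1 H2]. split; assumption.
Qed.

Lemma pair_lim (u v : nat -> R) x y :
  (forall eps, 0 < eps -> exists N, forall n, (N <= n)%nat -> Rabs (u n - x) < eps /\ Rabs (v n - y) < eps) ->
  filterlim (fun n => (u n, v n)) eventually (locally (x, y)).
Proof.
  intros H P [e He]. destruct (H e (cond_pos e)) as [N HN]. exists N. intros n Hn.
  apply He. destruct (HN n Hn). split; assumption.
Qed.

Lemma geo_small r C eps : 0 <= r < 1 -> 0 <= C -> 0 < eps -> exists N, forall n, (N <= n)%nat -> r ^ n * C < eps.
Proof.
  intros Hr HC He. destruct (pow_lt_1_zero r ltac:(rewrite Rabs_right; lra) (eps / (C + 1))) as [N HN].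
  { apply Rdiv_lt_0_compat; lra. }
  exists N. intros n Hn. specialize (HN n Hn). rewrite Rabs_right in HN by (apply Rle_ge, pow_le; lra).
  assert (r ^ n * C <= r ^ n * (C + 1)) by (apply Rmult_le_compat_l; [apply pow_le|]; lra).
  assert (r ^ n * (C + 1) < eps / (C + 1) * (C + 1)) by (apply Rmult_lt_compat_r; lra).
  assert (eps / (C + 1) * (C + 1) = eps) by (field; lra). lra.
Qed.

Lemma sol_per A b0 sigma g p T y0 S I : is_sol A b0 sigma g p T y0 S I -> forall n,
  (forall t, INR n * T < t < INR n * T + T ->
     is_derive S t (S t * (A - S t) - b0 * I t * S t) /\
     is_derive I t (b0 * I t * S t - (sigma + g) * I t)) /\
  filterlim S (at_right (INR n * T)) (locally (S (INR n * T))) /\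
  filterlim I (at_right (INR n * T)) (locally (I (INR n * T))) /\
  exists lS lI, filterlim S (at_left (INR n * T + T)) (locally lS) /\
    filterlim I (at_left (INR n * T + T)) (locally lI) /\
    S (INR (Datatypes.S n) * T) = (1 - p) * lS /\ I (INR (Datatypes.S n) * T) = lI.
Proof.
  intros [_ [_ H]] n. destruct (H n) as [HD [HrS [HrI [[lS [H1 H2]] [lI [H3 H4]]]]]].
  split; auto. split; auto. split; auto. exists lS, lI.
  rewrite S_INR. replace ((INR n + 1) * T) with (INR n * T + T) by ring. auto.
Qed.

Lemma sol_init A b0 sigma g p T y0 S I : is_sol A b0 sigma g p T y0 S I ->
  S (INR 0 * T) = fst y0 /\ I (INR 0 * T) = snd y0.
Proof. intros [H1 [H2 _]]. simpl. rewrite Rmult_0_l. auto. Qed.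

Section Part1.
Variables (A b0 sigma g p T : R).
Hypotheses (HA : 0 < A) (Hb : 0 < b0) (Hk : 0 < sigma + g) (HT : 0 < T) (Hp : 0 <= p <= 1).
Hypothesis Hrho : (1 - p) * exp (A * T) < 1.

Definition rho := (1 - p) * exp (A * T).
Definition q1 := exp (- ((sigma + g) / 2) * T).

Lemma rho_bounds : 0 <= rho < 1.
Proof. unfold rho. split; auto. apply Rmult_le_pos; [lra|left; apply exp_pos]. Qed.

Lemma q1_bounds : 0 <= q1 < 1.
Proof.
  unfold q1. split; [left; apply exp_pos|]. rewrite <- exp_0. apply exp_increasing.
  assert (0 < (sigma + g) / 2 * T) by (apply Rmult_lt_0_compat; lra). lra.
Qed.

Lemma part1_iter y0 S I : is_sol A b0 sigma g p T y0 S I ->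
  0 <= fst y0 -> 0 <= snd y0 -> b0 * (fst y0 * exp (A * T)) <= (sigma + g) / 2 ->
  forall n, 0 <= S (INR n * T) <= rho ^ n * fst y0 /\ 0 <= I (INR n * T) <= q1 ^ n * snd y0.
Proof.
  intros Hs H1 H2 Hsm. destruct (sol_init _ _ _ _ _ _ _ _ _ Hs) as [E1 E2].
  pose proof rho_bounds as Hr. pose proof q1_bounds as Hq.
  induction n as [|n [[IH1 IH2] [IH3 IH4]]].
  - rewrite E1, E2. simpl pow. lra.
  - destruct (sol_per _ _ _ _ _ _ _ _ _ Hs n) as [HD [HrS [HrI [lS [lI [HlS [HlI [ES EI]]]]]]]].
    destruct (per1 A b0 (sigma + g) (INR n * T) T S I HA Hb HT HD HrS HrI lS lI IH1 IH3 HlS HlI)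
      as [P1 [P2 [P3 P4]]].
    rewrite ES, EI. simpl pow.
    assert (rho ^ n <= 1) by (apply pow_le1; lra).
    assert (0 <= rho ^ n) by (apply pow_le; lra).
    split; split.
    + apply Rmult_le_pos; lra.
    + eapply Rle_trans. apply Rmult_le_compat_l; [lra|exact P2].
      replace ((1 - p) * (S (INR n * T) * exp (A * T))) with (rho * S (INR n * T)) by (unfold rho; ring).
      rewrite Rmult_assoc. apply Rmult_le_compat_l; lra.
    + auto.
    + apply Rle_trans with (I (INR n * T) * q1).
      * apply P4. eapply Rle_trans; [|exact Hsm]. apply Rmult_le_compat_l; [lra|].
        apply Rmult_le_compat_r; [left; apply exp_pos|].
        eapply Rle_trans; [exact IH2|]. rewrite <- (Rmult_1_l (fst y0)) at 2.
        apply Rmult_le_compat_r; lra.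
      * rewrite Rmult_comm, Rmult_assoc. apply Rmult_le_compat_l; lra.
Qed.

Theorem LAS_zero : LAS A b0 sigma g p T (0, 0).
Proof.
  pose proof rho_bounds as Hr. pose proof q1_bounds as Hq.
  set (dk := (sigma + g) / (2 * b0 * exp (A * T))).
  assert (Hdk : 0 < dk) by (unfold dk; apply Rdiv_lt_0_compat; [lra|]; pose proof (exp_pos (A * T)); apply Rmult_lt_0_compat; lra).
  assert (Key : forall d y0 S I, 0 < d -> d <= dk -> inD A y0 -> Rabs (fst y0 - 0) < d -> Rabs (snd y0 - 0) < d ->
     is_sol A b0 sigma g p T y0 S I ->
     forall n, 0 <= S (INR n * T) <= rho ^ n * fst y0 /\ 0 <= I (INR n * T) <= q1 ^ n * snd y0).
  { intros d y0 S I Hd Hddk [[H1 H1'] H2] Hy1 Hy2 Hs. apply part1_iter; auto.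
    rewrite Rminus_0_r, Rabs_right in Hy1 by lra.
    assert (fst y0 <= dk) by lra. unfold dk in H.
    pose proof (exp_pos (A * T)).
    assert (fst y0 * exp (A * T) <= (sigma + g) / (2 * b0 * exp (A * T)) * exp (A * T)) by (apply Rmult_le_compat_r; lra).
    replace ((sigma + g) / (2 * b0 * exp (A * T)) * exp (A * T)) with ((sigma + g) / (2 * b0)) in H3 by (field; lra).
    assert (b0 * (fst y0 * exp (A * T)) <= b0 * ((sigma + g) / (2 * b0))) by (apply Rmult_le_compat_l; lra).
    replace (b0 * ((sigma + g) / (2 * b0))) with ((sigma + g) / 2) in H4 by (field; lra). exact H4. }
  split.
  - intros V HV. destruct (locally_pair_eps 0 0 V HV) as [eps [He HVe]].
    set (d := Rmin eps dk). assert (Hd : 0 < d) by (apply Rmin_pos; lra).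
    assert (d <= eps) by apply Rmin_l. assert (d <= dk) by apply Rmin_r.
    exists (fun z => Rabs (fst z - 0) < d /\ Rabs (snd z - 0) < d). split; [apply pair_box_locally; auto|]. split.
    + intros [u v] [h1 h2]. apply HVe; simpl in *; lra.
    + intros y0 S I HD [Hy1 Hy2] Hs n.
      destruct (Key d y0 S I Hd H0 HD Hy1 Hy2 Hs n) as [[K1 K2] [K3 K4]].
      destruct HD as [[D1 D1'] D2].
      rewrite Rminus_0_r, Rabs_right in Hy1, Hy2 by lra.
      assert (rho ^ n <= 1) by (apply pow_le1; lra). assert (q1 ^ n <= 1) by (apply pow_le1; lra).
      assert (rho ^ n * fst y0 <= fst y0) by (rewrite <- (Rmult_1_l (fst y0)) at 2; apply Rmult_le_compat_r; lra).
      assert (q1 ^ n * snd y0 <= snd y0) by (rewrite <- (Rmult_1_l (snd y0)) at 2; apply Rmult_le_compat_r; lra).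
      apply HVe; rewrite Rminus_0_r, Rabs_right; lra.
  - exists (fun z => Rabs (fst z - 0) < dk /\ Rabs (snd z - 0) < dk). split; [apply pair_box_locally; auto|].
    intros y0 S I HD [Hy1 Hy2] Hs.
    pose proof (Key dk y0 S I Hdk (Rle_refl _) HD Hy1 Hy2 Hs) as K.
    destruct HD as [[D1 D1'] D2].
    apply pair_lim. intros eps He.
    destruct (geo_small rho (fst y0) eps Hr D1 He) as [N1 HN1].
    destruct (geo_small q1 (snd y0) eps Hq D2 He) as [N2 HN2].
    exists (max N1 N2). intros n Hn. destruct (K n) as [[K1 K2] [K3 K4]].
    specialize (HN1 n ltac:(lia)). specialize (HN2 n ltac:(lia)).
    rewrite !Rminus_0_r, !Rabs_right by lra. lra.
Qed.

End Part1.

End B13.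
Import B13.

Module B14.
Open Scope R_scope.

Section ScalSol.
Variables (A b0 sigma g p T : R).
Hypotheses (HA : 0 < A) (HT : 0 < T) (Hp0 : 0 <= p) (Hp1 : exp (- A * T) < 1 - p).

Definition KK := exp (A * T) * (1 - p) - 1.
Definition hS u := A * KK / (KK + p * exp (A * (T - u))).

Lemma KK_pos : 0 < KK.
Proof.
  unfold KK. pose proof (exp_pos (A * T)).
  assert (exp (A * T) * exp (- A * T) < exp (A * T) * (1 - p)) by (apply Rmult_lt_compat_l; lra).
  rewrite exp_mul_inv in H0. lra.
Qed.

Lemma den_pos u : 0 < KK + p * exp (A * (T - u)).
Proof. pose proof KK_pos. pose proof (exp_pos (A * (T - u))). nra. Qed.

Lemma hS_derive u : is_derive hS u (hS u * (A - hS u)).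
Proof.
  pose proof (den_pos u) as Hd. unfold hS.
  eapply d_eq.
  - apply (is_derive_ext (fun s => A * KK * / (KK + p * exp (A * (T - s))))).
    { intros t. reflexivity. }
    apply (is_derive_scal (fun s => / (KK + p * exp (A * (T - s)))) u (A * KK)).
    apply d_inv; [|lra].
    apply (d_plus (fun _ => KK) (fun s => p * exp (A * (T - s)))); [apply d_const|].
    apply (is_derive_scal (fun s => exp (A * (T - s)))). apply d_exp.
    apply (is_derive_scal (fun s => T - s)). apply (d_minus (fun _ => T) (fun s => s)); [apply d_const|apply d_id].
  - rfield. lra.
Qed.

Lemma hS_cont u : continuous hS u.
Proof. apply (ex_derive_continuous (K:=R_AbsRing) (V:=R_NormedModule)). eexists. apply hS_derive. Qed.

Lemma hS_jump : hS 0 = (1 - p) * hS T.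
Proof.
  unfold hS. pose proof (den_pos 0). pose proof (den_pos T). rewrite Rminus_diag, Rmult_0_r, exp_0 in *.
  rewrite Rminus_0_r in *. unfold KK in *. field. lra.
Qed.

Lemma Scal_eq n t : INR n * T <= t < INR n * T + T -> Scal A p T t = hS (t - INR n * T).
Proof.
  intros Ht. unfold Scal.
  rewrite (Int_part_eq (t / T) (Z.of_nat n)).
  - rewrite <- INR_IZR_INZ. unfold hS, KK. reflexivity.
  - rewrite <- INR_IZR_INZ. split.
    + apply (Rmult_le_reg_r T); auto. unfold Rdiv. rewrite Rmult_assoc, Rinv_l, Rmult_1_r by lra. lra.
    + apply (Rmult_lt_reg_r T); auto. unfold Rdiv. rewrite Rmult_assoc, Rinv_l, Rmult_1_r by lra. lra.
Qed.

Lemma Scal0 : Scal A p T 0 = hS 0.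
Proof. rewrite (Scal_eq 0); simpl; [ring_simplify (0 - 0 * T); reflexivity|lra]. Qed.

Theorem Scal_sol : is_sol A b0 sigma g p T (Scal A p T 0, 0) (Scal A p T) (fun _ => 0).
Proof.
  split; [reflexivity|]. split; [reflexivity|].
  intros n a.
  assert (ES : forall s, a <= s < a + T -> Scal A p T s = hS (s - a)).
  { intros s Hs. apply Scal_eq. exact Hs. }
  assert (Ha : 0 <= a) by (unfold a; apply Rmult_le_pos; [apply pos_INR|lra]).
  split; [|split; [|split; [|split]]].
  - intros t Ht. split.
    + apply (is_derive_ext_loc (fun s => hS (s - a))).
      { set (e := Rmin (t - a) (a + T - t)). assert (0 < e) by (apply Rmin_pos; lra).
        exists (mkposreal e H). intros y Hy'. change (Rabs (y - t) < e) in Hy'. apply Rabs_def2 in Hy'.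
        assert (e <= t - a) by apply Rmin_l. assert (e <= a + T - t) by apply Rmin_r.
        symmetry. apply ES. lra. }
      rewrite (ES t) by lra.
      eapply d_eq. apply (is_derive_comp hS (fun s => s - a) t); [apply hS_derive|].
      apply (d_minus (fun s => s) (fun _ => a) t 1 0); [apply d_id|apply d_const].
      simpl. unfold scal; simpl; unfold mult; simpl. ring.
    + eapply d_eq; [apply d_const|]. req.
  - apply (shift_right (Scal A p T) hS a T); auto. apply hS_cont.
  - apply lim_const.
  - exists (hS T). split.
    + apply (shift_left (Scal A p T) hS a T); auto. intros s Hs; apply ES; lra. apply hS_cont.
    + rewrite (Scal_eq (S n)). rewrite S_INR. unfold a. replace (INR n * T + T - (INR n + 1) * T) with 0 by ring.
      apply hS_jump. rewrite S_INR. unfold a. lra.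
  - exists 0. split; [apply lim_const|reflexivity].
Qed.

End ScalSol.

End B14.
Import B14.

Module B15.
Open Scope R_scope.

Section Part2.
Variables (A b0 sigma g p T : R).
Hypotheses (HA : 0 < A) (Hb : 0 < b0) (Hk : 0 < sigma + g) (HT : 0 < T) (Hp0 : 0 <= p) (Hp1 : p < 1).
Hypothesis Hlam : exp (- A * T) < 1 - p.
Hypothesis Hq : (b0 * A - (sigma + g)) * T + b0 * ln (1 - p) < 0.

Notation k := (sigma + g).

Lemma part2_inv x0 y0 S I : is_sol A b0 sigma g p T (x0, y0) S I -> 0 < x0 -> 0 <= y0 ->
  P0 A b0 k p T x0 y0 <= ws A p T / 2 -> b0 * (y0 * Gam A b0 p T * Eb A b0 p T) <= A / 2 ->
  forall n, Inv A b0 k p T x0 y0 n (S (INR n * T)) (I (INR n * T)).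
Proof.
  intros Hs Hx0 Hy0 Hsm1 Hsm2. induction n as [|n IH].
  - destruct (sol_init _ _ _ _ _ _ _ _ _ Hs) as [E1 E2]. rewrite E1, E2. simpl.
    eapply Inv0; eauto.
  - destruct (sol_per _ _ _ _ _ _ _ _ _ Hs n) as [HD [HrS [HrI [lS [lI [HlS [HlI [ES EI]]]]]]]].
    set (a := INR n * T) in *.
    assert (Hsmall := Inv_small A b0 k p T HA Hb HT Hp1 Hlam Hq x0 y0 Hx0 Hy0 Hsm1 Hsm2 n _ _ IH).
    destruct IH as [HSa [HIa [HPn HZn]]].
    pose proof (o1 A b0 k a T S I HA Hb Hk HT HD HrS HrI HSa HIa Hsmall lS lI HlS HlI) as [_ O1].
    pose proof (lS_pos A b0 k a T S I HA Hb Hk HT HD HrS HrI HSa HIa Hsmall lS lI HlS HlI) as LP.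
    pose proof (o2 A b0 k a T S I HA Hb Hk HT HD HrS HrI HSa HIa Hsmall lS lI HlS HlI) as O2.
    pose proof (o3 A b0 k a T S I HA Hb Hk HT HD HrS HrI HSa HIa Hsmall lS lI HlS HlI) as O3.
    pose proof (o4 A b0 k a T S I HA Hb Hk HT HD HrS HrI HSa HIa Hsmall lS lI HlS HlI) as O4.
    rewrite ES, EI.
    eapply Inv_step; eauto.
    split; auto.
Qed.


Lemma xs_eq : Scal A p T 0 = / ws A p T.
Proof.
  rewrite (Scal0 A p T HT). unfold hS, KK, ws, EA.
  rewrite Rminus_0_r.
  replace (- A * T) with (- (A * T)) by ring. rewrite exp_Ropp.
  pose proof (exp_pos (A * T)) as HE.
  assert (HE1 : 1 < exp (A * T)) by (rewrite <- exp_0; apply exp_increasing; nra).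
  assert (H1 : / exp (A * T) < 1 - p) by (replace (/ exp (A * T)) with (exp (- A * T)); [exact Hlam|rewrite <- exp_Ropp; f_equal; ring]).
  assert (exp (A * T) * / exp (A * T) < exp (A * T) * (1 - p)) by (apply Rmult_lt_compat_l; lra).
  rewrite Rinv_r in H by lra.
  assert (/ exp (A * T) < 1) by (rewrite <- Rinv_1; apply Rinv_lt_contravar; lra).
  field. repeat split; try lra.
Qed.

Lemma close_bound n x0 y0 x y : 0 <= y0 -> Inv A b0 k p T x0 y0 n x y ->
  Rabs (x - / ws A p T) <= mu A b0 k p T ^ n * P0 A b0 k p T x0 y0 * (x / ws A p T).
Proof.
  intros Hy0 [Hx [Hy [HP _]]].
  pose proof (ws_pos A p T HA HT Hlam) as Hws.
  pose proof (cc_pos A b0 k p T HA Hb HT Hp1 Hlam Hq y0 Hy0) as Hcc.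
  pose proof (qq_bounds A b0 k p T Hq) as Hqq.
  assert (0 <= cc A b0 k p T y0 * qq A b0 k p T ^ n) by (apply Rmult_le_pos; auto; apply pow_le; lra).
  replace (x - / ws A p T) with ((/ x - ws A p T) * (- (x / ws A p T))) by (field; lra).
  rewrite Rabs_mult, Rabs_Ropp, (Rabs_right (x / ws A p T)) by (left; apply Rdiv_lt_0_compat; lra).
  apply Rmult_le_compat_r; [left; apply Rdiv_lt_0_compat; lra|]. lra.
Qed.

Theorem LAS_per : LAS A b0 sigma g p T (Scal A p T 0, 0).
Proof.
  rewrite xs_eq.
  set (w := ws A p T). set (xs := / w).
  pose proof (ws_pos A p T HA HT Hlam) as Hw. fold w in Hw.
  assert (Hxs : 0 < xs) by (apply Rinv_0_lt_compat; auto).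
  pose proof (mu_bounds A b0 k p T HA HT Hp1 Hlam Hq) as [M1 [M2 M3]].
  pose proof (lam_bounds A p T HA HT Hp1 Hlam) as HL.
  pose proof (qq_bounds A b0 k p T Hq) as Hqq.
  pose proof (C2_pos A b0 p T HA Hb HT Hp1) as HC2.
  set (mu' := mu A b0 k p T) in *. set (q' := qq A b0 k p T) in *.
  set (Gm := Gam A b0 p T). set (E := Eb A b0 p T). set (xh := xhi A p T).
  assert (HGm : 0 < Gm) by apply exp_pos. assert (HE : 0 < E) by apply exp_pos.
  assert (Hxh : 0 < xh) by (unfold xh, xhi; fold w; apply Rdiv_lt_0_compat; lra).
  set (K1 := 2 / (xs * xs) + C2 A b0 p T / (mu' - q')).
  assert (HK1 : 0 < K1).
  { unfold K1. assert (0 < 2 / (xs * xs)) by (apply Rdiv_lt_0_compat; nra).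
    assert (0 <= C2 A b0 p T / (mu' - q')) by (apply Rdiv_le_0_compat; lra). lra. }
  assert (Key : forall eps, 0 < eps -> exists d, 0 < d /\ d <= eps /\
     forall y0 S I, inD A y0 -> Rabs (fst y0 - xs) < d -> Rabs (snd y0 - 0) < d ->
       is_sol A b0 sigma g p T y0 S I ->
       forall n, 0 <= I (INR n * T) <= q' ^ n * (snd y0 * Gm) /\ snd y0 * Gm < eps /\
         Rabs (S (INR n * T) - xs) <= mu' ^ n * (P0 A b0 k p T (fst y0) (snd y0) * (xh / w)) /\
         P0 A b0 k p T (fst y0) (snd y0) * (xh / w) < eps).
  { intros eps He.
    set (d := Rmin (Rmin (xs / 2) (w / (2 * K1))) (Rmin (Rmin (eps * w / (2 * K1 * xh)) (eps / (2 * Gm)))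
                   (Rmin (A / (2 * b0 * Gm * E)) eps))).
    assert (Hd1 : d <= xs / 2) by (unfold d; eapply Rle_trans; [apply Rmin_l|apply Rmin_l]).
    assert (Hd2 : d <= w / (2 * K1)) by (unfold d; eapply Rle_trans; [apply Rmin_l|apply Rmin_r]).
    assert (Hd3 : d <= eps * w / (2 * K1 * xh)) by (unfold d; eapply Rle_trans; [apply Rmin_r|]; eapply Rle_trans; [apply Rmin_l|apply Rmin_l]).
    assert (Hd4 : d <= eps / (2 * Gm)) by (unfold d; eapply Rle_trans; [apply Rmin_r|]; eapply Rle_trans; [apply Rmin_l|apply Rmin_r]).
    assert (Hd5 : d <= A / (2 * b0 * Gm * E)) by (unfold d; eapply Rle_trans; [apply Rmin_r|]; eapply Rle_trans; [apply Rmin_r|apply Rmin_l]).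
    assert (Hd6 : d <= eps) by (unfold d; eapply Rle_trans; [apply Rmin_r|]; eapply Rle_trans; [apply Rmin_r|apply Rmin_r]).
    assert (Hd : 0 < d).
    { assert (P1 : 0 < xs / 2) by lra.
      assert (P2 : 0 < w / (2 * K1)) by (apply Rdiv_lt_0_compat; lra).
      assert (P3 : 0 < eps * w / (2 * K1 * xh)).
      { apply Rdiv_lt_0_compat; [apply Rmult_lt_0_compat; lra|]. apply Rmult_lt_0_compat; [apply Rmult_lt_0_compat|]; lra. }
      assert (P4 : 0 < eps / (2 * Gm)) by (apply Rdiv_lt_0_compat; lra).
      assert (P5 : 0 < A / (2 * b0 * Gm * E)).
      { apply Rdiv_lt_0_compat; [lra|]. apply Rmult_lt_0_compat; [apply Rmult_lt_0_compat; [apply Rmult_lt_0_compat|]|]; lra. }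
      unfold d. repeat apply Rmin_pos; assumption. }
    exists d. split; auto. split; auto.
    intros [x0 y0] S I [[HD1 HD1'] HD2] Hx Hy Hs n. simpl in Hx, Hy, HD1, HD1', HD2 |- *.
    rewrite Rminus_0_r, Rabs_right in Hy by lra.
    apply Rabs_def2 in Hx.
    assert (Hx0 : 0 < x0) by lra.
    assert (HP0 : P0 A b0 k p T x0 y0 <= d * K1).
    { unfold P0, cc, K1. fold w mu' q'.
      assert (Rabs (/ x0 - w) <= 2 / (xs * xs) * d).
      { replace (/ x0 - w) with ((xs - x0) / (x0 * xs)) by (unfold xs; field; lra).
        unfold Rdiv. rewrite Rabs_mult, Rabs_Rinv by nra. rewrite (Rabs_right (x0 * xs)) by nra.
        assert (Rabs (xs - x0) < d) by (apply Rabs_def1; lra).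
        assert (xs * xs / 2 <= x0 * xs) by nra.
        assert (/ (x0 * xs) <= / (xs * xs / 2)) by (apply Rinv_le_contravar; nra).
        replace (2 * / (xs * xs) * d) with (d * / (xs * xs / 2)) by (field; lra).
        apply Rmult_le_compat; [apply Rabs_pos|left; apply Rinv_0_lt_compat; nra|lra|auto]. }
      assert (C2 A b0 p T * y0 / (mu' - q') <= C2 A b0 p T / (mu' - q') * d).
      { unfold Rdiv. rewrite (Rmult_comm (C2 A b0 p T * / (mu' - q')) d).
        replace (C2 A b0 p T * y0 * / (mu' - q')) with (y0 * (C2 A b0 p T * / (mu' - q'))) by ring.
        apply Rmult_le_compat_r; [|lra]. apply Rmult_le_pos; [lra|left; apply Rinv_0_lt_compat; lra]. }
      lra. }
    assert (Hsm1 : P0 A b0 k p T x0 y0 <= w / 2).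
    { eapply Rle_trans; [exact HP0|]. replace (w / 2) with (w / (2 * K1) * K1) by (field; lra).
      apply Rmult_le_compat_r; lra. }
    assert (Hsm2 : b0 * (y0 * Gm * E) <= A / 2).
    { assert (y0 * Gm * E <= d * Gm * E) by (apply Rmult_le_compat_r; [lra|]; apply Rmult_le_compat_r; lra).
      assert (d * Gm * E <= A / (2 * b0 * Gm * E) * Gm * E) by (apply Rmult_le_compat_r; [lra|]; apply Rmult_le_compat_r; lra).
      replace (A / (2 * b0 * Gm * E) * Gm * E) with (A / (2 * b0)) in H0 by (field; repeat split; lra).
      assert (b0 * (y0 * Gm * E) <= b0 * (A / (2 * b0))) by (apply Rmult_le_compat_l; lra).
      replace (b0 * (A / (2 * b0))) with (A / 2) in H1 by (field; lra). exact H1. }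
    pose proof (part2_inv x0 y0 S I Hs Hx0 HD2 Hsm1 Hsm2 n) as HI.
    pose proof (Inv_y A b0 k p T HA Hb HT Hp1 Hlam Hq x0 y0 Hx0 HD2 Hsm1 n _ _ HI) as HY.
    assert (HXX : xlo A p T <= S (INR n * T) <= xhi A p T) by (apply (Inv_x A b0 k p T HA Hb HT Hp1 Hlam Hq x0 y0 HD2 Hsm1 n _ _ HI)). destruct HXX as [_ HX].
    pose proof (close_bound n x0 y0 _ _ HD2 HI) as HC.
    destruct HI as [HSn [HIn _]].
    split; [split; auto|]. split; [|split].
    - assert (y0 * Gm <= d * Gm) by (apply Rmult_le_compat_r; lra).
      assert (d * Gm <= eps / (2 * Gm) * Gm) by (apply Rmult_le_compat_r; lra).
      replace (eps / (2 * Gm) * Gm) with (eps / 2) in H0 by (field; lra). lra.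
    - eapply Rle_trans; [exact HC|]. rewrite Rmult_assoc. apply Rmult_le_compat_l; [apply pow_le; lra|].
      apply Rmult_le_compat_l; [unfold P0; pose proof (Rabs_pos (/ x0 - w)); pose proof (cc_pos A b0 k p T HA Hb HT Hp1 Hlam Hq y0 HD2); fold w; lra|].
      unfold Rdiv. apply Rmult_le_compat_r; [left; apply Rinv_0_lt_compat; lra|exact HX].
    - assert (P0 A b0 k p T x0 y0 * (xh / w) <= d * K1 * (xh / w)) by (apply Rmult_le_compat_r; [apply Rdiv_le_0_compat; lra|exact HP0]).
      assert (d * K1 * (xh / w) <= eps * w / (2 * K1 * xh) * K1 * (xh / w)).
      { apply Rmult_le_compat_r; [apply Rdiv_le_0_compat; lra|]. apply Rmult_le_compat_r; lra. }
      replace (eps * w / (2 * K1 * xh) * K1 * (xh / w)) with (eps / 2) in H0 by (field; repeat split; lra).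
      lra. }
  split.
  - intros V HV. destruct (locally_pair_eps xs 0 V HV) as [eps [He HVe]].
    destruct (Key eps He) as [d [Hd [Hde HK]]].
    exists (fun z => Rabs (fst z - xs) < d /\ Rabs (snd z - 0) < d). split; [apply pair_box_locally; auto|]. split.
    + intros [u v] [h1 h2]. apply HVe; simpl in *; lra.
    + intros y0 S I HD [Hy1 Hy2] Hs n.
      destruct (HK y0 S I HD Hy1 Hy2 Hs n) as [[K1' K2'] [K3' [K4' K5']]].
      assert (q' ^ n <= 1) by (apply pow_le1; lra). assert (mu' ^ n <= 1) by (apply pow_le1; lra).
      assert (0 <= snd y0 * Gm) by (destruct HD; apply Rmult_le_pos; lra).
      assert (0 <= P0 A b0 k p T (fst y0) (snd y0) * (xh / w)).
      { destruct HD as [_ HD2']. apply Rmult_le_pos; [|apply Rdiv_le_0_compat; lra].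
        unfold P0. pose proof (Rabs_pos (/ fst y0 - ws A p T)). pose proof (cc_pos A b0 k p T HA Hb HT Hp1 Hlam Hq (snd y0) HD2'). lra. }
      assert (q' ^ n * (snd y0 * Gm) <= snd y0 * Gm) by (rewrite <- (Rmult_1_l (snd y0 * Gm)) at 2; apply Rmult_le_compat_r; lra).
      assert (mu' ^ n * (P0 A b0 k p T (fst y0) (snd y0) * (xh / w)) <= P0 A b0 k p T (fst y0) (snd y0) * (xh / w))
        by (rewrite <- (Rmult_1_l (P0 A b0 k p T (fst y0) (snd y0) * (xh / w))) at 2; apply Rmult_le_compat_r; lra).
      apply HVe; [lra|]. rewrite Rminus_0_r, Rabs_right; lra.
  - destruct (Key 1 Rlt_0_1) as [d [Hd [Hde HK]]].
    exists (fun z => Rabs (fst z - xs) < d /\ Rabs (snd z - 0) < d). split; [apply pair_box_locally; auto|].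
    intros y0 S I HD [Hy1 Hy2] Hs.
    pose proof (HK y0 S I HD Hy1 Hy2 Hs) as K.
    destruct (K O) as [_ [_ [K0a _]]]. simpl pow in K0a.
    assert (HC0 : 0 <= P0 A b0 k p T (fst y0) (snd y0) * (xh / w)).
    { destruct HD as [_ HD2']. apply Rmult_le_pos; [|apply Rdiv_le_0_compat; lra].
      unfold P0. pose proof (Rabs_pos (/ fst y0 - ws A p T)). pose proof (cc_pos A b0 k p T HA Hb HT Hp1 Hlam Hq (snd y0) HD2'). lra. }
    assert (HG0 : 0 <= snd y0 * Gm) by (destruct HD; apply Rmult_le_pos; lra).
    apply pair_lim. intros eps He.
    destruct (geo_small mu' _ eps ltac:(lra) HC0 He) as [N1 HN1].
    destruct (geo_small q' _ eps ltac:(lra) HG0 He) as [N2 HN2].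
    exists (max N1 N2). intros n Hn. destruct (K n) as [[K1' K2'] [_ [K4' _]]].
    specialize (HN1 n ltac:(lia)). specialize (HN2 n ltac:(lia)).
    split; [lra|]. rewrite Rminus_0_r, Rabs_right; lra.
Qed.

End Part2.

End B15.
Import B15.

Theorem proposition9 (A b0 sigma g p T : R) :
  0 < A <= 1 -> 0 < b0 -> 0 <= sigma -> 0 <= g -> 0 < sigma + g ->
  0 <= p <= 1 -> 0 < T ->
  (* well-posedness: solutions from the state space exist *)
  (forall y0, inD A y0 -> exists S I, is_sol A b0 sigma g p T y0 S I) /\
  (* (1) *)
  (p1 A T < p -> LAS A b0 sigma g p T (0, 0)) /\
  (* (2) *)
  (p2 A b0 sigma g T < p < p1 A T ->
     is_sol A b0 sigma g p T (Scal A p T 0, 0) (Scal A p T) (fun _ => 0) /\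
     LAS A b0 sigma g p T (Scal A p T 0, 0)).
Proof.
  intros [HA HA1] Hb Hs Hg Hk Hp HT.
  assert (EE : exp (- A * T) = exp (- (A * T))) by (f_equal; ring).
  split; [|split].
  - intros [x0 y0] [[H1 H2] H3]. simpl in *.
    exists (gS A b0 sigma g p T x0 y0), (gI A b0 sigma g p T x0 y0).
    apply glue_sol; auto.
  - intros Hp1. unfold p1 in Hp1. apply LAS_zero; auto.
    pose proof (exp_pos (A * T)).
    assert ((1 - p) * exp (A * T) < exp (- (A * T)) * exp (A * T)) by (apply Rmult_lt_compat_r; lra).
    rewrite <- exp_plus in H0. replace (- (A * T) + A * T) with 0 in H0 by ring. rewrite exp_0 in H0. exact H0.
  - intros [Hp2 Hp1]. unfold p1 in Hp1. unfold p2, Sc in Hp2.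
    assert (Hlam : exp (- A * T) < 1 - p) by (rewrite EE; lra).
    assert (Hpl : p < 1) by (pose proof (exp_pos (- (A * T))); lra).
    assert (Hq : (b0 * A - (sigma + g)) * T + b0 * ln (1 - p) < 0).
    { assert (1 - p < exp (- ((A - (sigma + g) / b0) * T))) by lra.
      apply ln_increasing in H; [|lra]. rewrite ln_exp in H.
      assert (b0 * ln (1 - p) < b0 * (- ((A - (sigma + g) / b0) * T))) by (apply Rmult_lt_compat_l; lra).
      replace (b0 * (- ((A - (sigma + g) / b0) * T))) with (- ((b0 * A - (sigma + g)) * T)) in H0 by (field; lra).
      lra. }
    split.
    + apply Scal_sol; auto. lra.
    + apply LAS_per; auto.
Qed.
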